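(* Let $t\mapsto f_t$ be a $C^1$ family of piecewise expanding $C^1$ unimodal maps such that $f_0$ is good and $J(f_0,\partial_tf_t|_{t=0})\neq0$. (A) If the critical point of $f_0$ is periodic, then there exists a sequence of parameters $t_n\to0$ such that the critical point of $f_{t_n}$ is not periodic. (B) If the critical point of $f_0$ is not periodic, then there exists a sequence of parameters $t_n\to0$ such that the critical point of $f_{t_n}$ is periodic.
   Context: Let $I=[-1,1]$ and $c=0$ (the critical point). $\mathcal B^1(I)$ is the Banach space of continuous $f:I\to\mathbb R$ that are $C^1$ on $[-1,0]$ and on $[0,1]$ with $f(1)=f(-1)$, normed by $|f|_1=\max\{|f|_{C^1[-1,0]},|f|_{C^1[0,1]}\}$. A piecewise expanding $C^1$ unimodal map is an $f\in\mathcal B^1(I)$ with $f(-1)=f(1)=-1$, $\inf_{x\in[-1,0]}Df(x)>1$, $\sup_{x\in[0,1]}Df(x)<-1$ and $f(0)\le1$; the set of these is $\mathcal U^1$. A $C^1$ family of such maps is a $C^1$ map $t\mapsto f_t$ from an interval around $0$ into $\mathcal U^1\subset\mathcal B^1(I)$. $f$ is good if either $c$ is not periodic, or $c$ has prime period $p\ge2$ and $|Df^{p-1}(f(c))|\min\{|Df^+(c)|,|Df^-(c)|\}>2$ ($Df^\pm(c)$ one-sided derivatives at $c$). For bounded $v:I\to\mathbb R$: if $c$ is not periodic for $f$, $J(f,v)=\sum_{i=0}^\infty \frac{v(f^i(c))}{Df^i(f(c))}$; if $c$ has prime period $p$, $J(f,v)=\sum_{i=0}^{p-1}\frac{v(f^i(c))}{Df^i(f(c))}$.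 *)

(* Defs.v *)
From Stdlib Require Import Reals ClassicalEpsilon.
From Coquelicot Require Import Coquelicot.
Open Scope R_scope.

(* Maps are modelled as functions R -> R; only their values on I = [-1,1] matter. *)

Definition is_hderiv (f : R -> R) (a b x l : R) : Prop :=
  filterlim (fun y => (f y - f x) / (y - x))
    (within (fun y => a <= y <= b /\ y <> x) (locally x)) (locally l).

(** The derivative of [f|[a,b]] at [x] (unique when it exists, a < b). *)
Definition hD (f : R -> R) (a b x : R) : R :=
  epsilon (inhabits 0) (is_hderiv f a b x).

Definition C1_on (f : R -> R) (a b : R) : Prop :=
  forall x, a <= x <= b ->
    (exists l, is_hderiv f a b x l) /\
    filterlim (hD f a b) (within (fun y => a <= y <= b) (locally x))
      (locally (hD f a b x)).

Definition Dm (f : R -> R) (x : R) : R := hD f (-1) 0 x.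
Definition Dp (f : R -> R) (x : R) : R := hD f 0 1 x.

Definition B1 (f : R -> R) : Prop :=
  (forall x, -1 <= x <= 1 ->
     filterlim f (within (fun y => -1 <= y <= 1) (locally x)) (locally (f x))) /\
  C1_on f (-1) 0 /\ C1_on f 0 1 /\ f 1 = f (-1).

Definition B1norm_le (h : R -> R) (eps : R) : Prop :=
  (forall x, -1 <= x <= 0 -> Rabs (h x) <= eps /\ Rabs (Dm h x) <= eps) /\
  (forall x, 0 <= x <= 1 -> Rabs (h x) <= eps /\ Rabs (Dp h x) <= eps).

Definition U1 (f : R -> R) : Prop :=
  B1 f /\ f (-1) = -1 /\ f 1 = -1 /\
  (exists lam, lam > 1 /\ forall x, -1 <= x <= 0 -> Dm f x >= lam) /\
  (exists lam, lam < -1 /\ forall x, 0 <= x <= 1 -> Dp f x <= lam) /\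
  f 0 <= 1.

Definition C1_family (F G : R -> R -> R) (delta : R) : Prop :=
  0 < delta /\
  (forall t, Rabs t < delta -> U1 (F t)) /\
  (forall t, Rabs t < delta -> B1 (G t)) /\
  (forall t, Rabs t < delta -> forall eps, eps > 0 -> exists eta, eta > 0 /\
     forall h, h <> 0 -> Rabs h < eta -> Rabs (t + h) < delta ->
       B1norm_le (fun x => (F (t + h) x - F t x) / h - G t x) eps) /\
  (forall t, Rabs t < delta -> forall eps, eps > 0 -> exists eta, eta > 0 /\
     forall s, Rabs s < delta -> Rabs (s - t) < eta ->
       B1norm_le (fun x => G s x - G t x) eps).

(** Dynamics of the critical point c = 0. *)
Definition periodic (f : R -> R) : Prop :=
  exists p : nat, (1 <= p)%nat /\ Nat.iter p f 0 = 0.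

Definition prime_period (f : R -> R) (p : nat) : Prop :=
  (1 <= p)%nat /\ Nat.iter p f 0 = 0 /\
  forall q : nat, (1 <= q)%nat -> (q < p)%nat -> Nat.iter q f 0 <> 0.

(** Df: derivative of f away from c (one-sided at +-1); the value at c is
    never used below. *)
Definition Df (f : R -> R) (x : R) : R :=
  if Rle_dec x 0 then Dm f x else Dp f x.

(** Df^n(y) = prod_{j<n} Df(f^j(y))  (chain rule for the iterate). *)
Fixpoint Dfn (f : R -> R) (n : nat) (y : R) : R :=
  match n with
  | O => 1
  | S k => Dfn f k y * Df f (Nat.iter k f y)
  end.

Definition good (f : R -> R) : Prop :=
  ~ periodic f \/
  exists p : nat, prime_period f p /\ (2 <= p)%nat /\
    Rabs (Dfn f (p - 1) (f 0)) * Rmin (Rabs (Dp f 0)) (Rabs (Dm f 0)) > 2.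

Fixpoint sumR (n : nat) (g : nat -> R) : R :=
  match n with
  | O => 0
  | S k => sumR k g + g k
  end.

Definition Jterm (f v : R -> R) (i : nat) : R :=
  v (Nat.iter i f 0) / Dfn f i (f 0).

Definition J (f v : R -> R) : R :=
  if excluded_middle_informative (periodic f)
  then sumR (epsilon (inhabits 0%nat) (prime_period f)) (Jterm f v)
  else Series (Jterm f v).

(* Main.v *)
Require Import Defs.
From Stdlib Require Import Reals.
From Coquelicot Require Import Coquelicot.
From Stdlib Require Import Lra Lia ClassicalEpsilon Classical FunctionalExtensionality.
Open Scope R_scope.

Lemma ball_R (x y e : R) : ball x e y <-> Rabs (y - x) < e.
Proof. unfold ball; simpl; unfold AbsRing_ball, abs, minus, plus, opp; simpl. tauto. Qed.

Lemma within_eps (g : R -> R) (D : R -> Prop) x l :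
  filterlim g (within D (locally x)) (locally l) <->
  (forall e, e > 0 -> exists d, d > 0 /\ forall y, D y -> Rabs (y - x) < d -> Rabs (g y - l) < e).
Proof.
  split.
  - intros H e He. 
    assert (H1 := proj1 (filterlim_locally g l) H (mkposreal e He)).
    destruct H1 as [d Hd]. exists d. split. apply cond_pos.
    intros y Dy Hy. apply ball_R. apply Hd. apply ball_R. exact Hy. exact Dy.
  - intros H. apply (proj2 (filterlim_locally g l)). intros [e He].
    destruct (H e He) as [d [Hd H']]. exists (mkposreal d Hd).
    intros y Hy Dy. apply ball_R. apply ball_R in Hy. apply H'; auto.
Qed.

Lemma hderiv_eps f a b x l :
  is_hderiv f a b x l <->
  (forall e, e > 0 -> exists d, d > 0 /\ forall y, a <= y <= b -> y <> x ->
     Rabs (y - x) < d -> Rabs ((f y - f x) / (y - x) - l) < e).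
Proof.
  unfold is_hderiv. rewrite within_eps. split.
  - intros H e He. destruct (H e He) as [d [Hd H']]. exists d; split; [exact Hd|].
    intros y Hy Hyx Hd'. apply H'; auto.
  - intros H e He. destruct (H e He) as [d [Hd H']]. exists d; split; [exact Hd|].
    intros y [Hy Hyx] Hd'. apply H'; auto.
Qed.

Lemma hderiv_unique f a b x l1 l2 :
  a < b -> a <= x <= b -> is_hderiv f a b x l1 -> is_hderiv f a b x l2 -> l1 = l2.
Proof.
  intros Hab Hx H1 H2. rewrite hderiv_eps in H1, H2.
  destruct (Req_dec l1 l2) as [E|NE]; auto. exfalso.
  set (e := Rabs (l1 - l2) / 2).
  assert (He : e > 0) by (unfold e; assert (l1 - l2 <> 0) by lra; pose proof (Rabs_pos_lt _ H); lra).
  destruct (H1 e He) as [d1 [Hd1 K1]]. destruct (H2 e He) as [d2 [Hd2 K2]].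
  set (s := Rmin (Rmin d1 d2) (b - a) / 2).
  assert (Hm : 0 < Rmin (Rmin d1 d2) (b - a)) by (apply Rmin_pos; [apply Rmin_pos|]; lra).
  assert (Hs : 0 < s) by (unfold s; lra).
  assert (Hs1 : s < d1) by (unfold s; pose proof (Rmin_l (Rmin d1 d2) (b-a)); pose proof (Rmin_l d1 d2);
     assert (0 < Rmin (Rmin d1 d2) (b - a)) by (apply Rmin_pos; [apply Rmin_pos|]; lra); lra).
  assert (Hs2 : s < d2) by (unfold s; pose proof (Rmin_l (Rmin d1 d2) (b-a)); pose proof (Rmin_r d1 d2);
     assert (0 < Rmin (Rmin d1 d2) (b - a)) by (apply Rmin_pos; [apply Rmin_pos|]; lra); lra).
  assert (Hs3 : s <= (b - a) / 2) by (unfold s; pose proof (Rmin_r (Rmin d1 d2) (b-a)); lra).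
  destruct (Rle_dec (x + s) b) as [Hle|Hgt].
  - specialize (K1 (x + s)). specialize (K2 (x + s)).
    assert (A1 : a <= x + s <= b) by lra.
    assert (A2 : x + s <> x) by lra.
    assert (A3 : Rabs (x + s - x) < d1) by (rewrite Rabs_right; lra).
    assert (A4 : Rabs (x + s - x) < d2) by (rewrite Rabs_right; lra).
    specialize (K1 A1 A2 A3). specialize (K2 A1 A2 A4).
    set (q := (f (x + s) - f x) / (x + s - x)) in *.
    assert (Rabs (l1 - l2) <= Rabs (q - l1) + Rabs (q - l2)).
    { replace (l1 - l2) with (- (q - l1) + (q - l2)) by ring.
      eapply Rle_trans. apply Rabs_triang. rewrite Rabs_Ropp. lra. }
    unfold e in *; lra.
  - specialize (K1 (x - s)). specialize (K2 (x - s)).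
    assert (A1 : a <= x - s <= b) by lra.
    assert (A2 : x - s <> x) by lra.
    assert (A3 : Rabs (x - s - x) < d1) by (rewrite Rabs_left; lra).
    assert (A4 : Rabs (x - s - x) < d2) by (rewrite Rabs_left; lra).
    specialize (K1 A1 A2 A3). specialize (K2 A1 A2 A4).
    set (q := (f (x - s) - f x) / (x - s - x)) in *.
    assert (Rabs (l1 - l2) <= Rabs (q - l1) + Rabs (q - l2)).
    { replace (l1 - l2) with (- (q - l1) + (q - l2)) by ring.
      eapply Rle_trans. apply Rabs_triang. rewrite Rabs_Ropp. lra. }
    unfold e in *; lra.
Qed.

Lemma hD_spec f a b x : (exists l, is_hderiv f a b x l) -> is_hderiv f a b x (hD f a b x).
Proof. intros H. unfold hD. apply epsilon_spec. exact H. Qed.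

Lemma hD_eq f a b x l : a < b -> a <= x <= b -> is_hderiv f a b x l -> hD f a b x = l.
Proof.
  intros Hab Hx H. eapply hderiv_unique; eauto. apply hD_spec. eauto.
Qed.

Lemma hderiv_lin f g a b x l1 l2 al be :
  is_hderiv f a b x l1 -> is_hderiv g a b x l2 ->
  is_hderiv (fun y => al * f y + be * g y) a b x (al * l1 + be * l2).
Proof.
  rewrite !hderiv_eps. intros H1 H2 e He.
  set (e' := e / (Rabs al + Rabs be + 1)).
  assert (He' : e' > 0) by (unfold e'; apply Rdiv_lt_0_compat; [lra|
     pose proof (Rabs_pos al); pose proof (Rabs_pos be); lra]).
  destruct (H1 e' He') as [d1 [Hd1 K1]]. destruct (H2 e' He') as [d2 [Hd2 K2]].
  exists (Rmin d1 d2). split. apply Rmin_pos; auto.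
  intros y Hy Hyx Hd. 
  assert (Hd1' : Rabs (y - x) < d1) by (pose proof (Rmin_l d1 d2); lra).
  assert (Hd2' : Rabs (y - x) < d2) by (pose proof (Rmin_r d1 d2); lra).
  specialize (K1 y Hy Hyx Hd1'). specialize (K2 y Hy Hyx Hd2').
  assert (Hyx' : y - x <> 0) by lra.
  replace ((al * f y + be * g y - (al * f x + be * g x)) / (y - x) - (al * l1 + be * l2))
    with (al * ((f y - f x) / (y - x) - l1) + be * ((g y - g x) / (y - x) - l2)) by (field; auto).
  eapply Rle_lt_trans. apply Rabs_triang. rewrite !Rabs_mult.
  assert (Rabs al * Rabs ((f y - f x) / (y - x) - l1) <= Rabs al * e')
    by (apply Rmult_le_compat_l; [apply Rabs_pos| lra]).
  assert (Rabs be * Rabs ((g y - g x) / (y - x) - l2) <= Rabs be * e')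
    by (apply Rmult_le_compat_l; [apply Rabs_pos| lra]).
  assert ((Rabs al + Rabs be) * e' < e).
  { unfold e'. apply (Rmult_lt_reg_r (Rabs al + Rabs be + 1)).
    pose proof (Rabs_pos al); pose proof (Rabs_pos be); lra.
    field_simplify. 2: pose proof (Rabs_pos al); pose proof (Rabs_pos be); lra.
    pose proof (Rabs_pos al); pose proof (Rabs_pos be); nra. }
  lra.
Qed.

Lemma hderiv_cont f a b x l : is_hderiv f a b x l ->
  forall e, e > 0 -> exists d, d > 0 /\ forall y, a <= y <= b -> Rabs (y - x) < d ->
    Rabs (f y - f x) < e.
Proof.
  rewrite hderiv_eps. intros H e He.
  destruct (H 1 ltac:(lra)) as [d1 [Hd1 K]].
  assert (Hl : Rabs l + 1 > 0) by (pose proof (Rabs_pos l); lra).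
  exists (Rmin d1 (e / (Rabs l + 1))). split.
  apply Rmin_pos; auto. apply Rdiv_lt_0_compat; lra.
  intros y Hy Hd.
  destruct (Req_dec y x) as [E|NE]. subst. replace (f x - f x) with 0 by ring. rewrite Rabs_R0; lra.
  assert (Hd1' : Rabs (y - x) < d1) by (pose proof (Rmin_l d1 (e / (Rabs l + 1))); lra).
  assert (Hd2 : Rabs (y - x) < e / (Rabs l + 1)) by (pose proof (Rmin_r d1 (e / (Rabs l + 1))); lra).
  specialize (K y Hy NE Hd1').
  assert (Hyx : y - x <> 0) by lra.
  assert (Hq : Rabs ((f y - f x) / (y - x)) < Rabs l + 1).
  { replace ((f y - f x) / (y - x)) with (((f y - f x) / (y - x) - l) + l) by ring.
    eapply Rle_lt_trans. apply Rabs_triang. lra. }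
  replace (f y - f x) with ((f y - f x) / (y - x) * (y - x)) by (field; auto).
  rewrite Rabs_mult.
  assert (Rabs (y - x) > 0) by (apply Rabs_pos_lt; auto).
  apply Rlt_le_trans with ((Rabs l + 1) * Rabs (y - x)).
  apply Rmult_lt_compat_r; auto.
  apply Rmult_lt_compat_l with (r := Rabs l + 1) in Hd2; auto.
  replace ((Rabs l + 1) * (e / (Rabs l + 1))) with e in Hd2 by (field; lra). lra.
Qed.

Lemma hderiv_interior f a b x l : a < x < b -> is_hderiv f a b x l -> derivable_pt_lim f x l.
Proof.
  rewrite hderiv_eps. intros Hx H e He.
  destruct (H e He) as [d [Hd K]].
  assert (Hm : 0 < Rmin d (Rmin (x - a) (b - x))) by (apply Rmin_pos; [lra| apply Rmin_pos; lra]).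
  exists (mkposreal _ Hm). intros h Hh Hlt. simpl in Hlt.
  pose proof (Rmin_l d (Rmin (x - a) (b - x))). pose proof (Rmin_r d (Rmin (x - a) (b - x))).
  pose proof (Rmin_l (x - a) (b - x)). pose proof (Rmin_r (x - a) (b - x)).
  specialize (K (x + h)).
  replace (x + h - x) with h in K by ring.
  apply K; try lra.
  split; destruct (Rabs_def2 h (Rmin d (Rmin (x - a) (b - x)))); lra.
Qed.

Lemma le_eps_close A B : (forall e, e > 0 -> B - e <= A) -> B <= A.
Proof.
  intros H. destruct (Rle_dec B A); auto. exfalso.
  specialize (H ((B - A) / 2) ltac:(lra)). lra.
Qed.

Lemma mvi_lower f d a b m : a < b ->
  (forall x, a <= x <= b -> is_hderiv f a b x (d x)) ->
  (forall x, a <= x <= b -> m <= d x) ->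
  forall x y, a <= x -> x <= y -> y <= b -> m * (y - x) <= f y - f x.
Proof.
  intros Hab Hd Hm x y Hx Hxy Hy.
  destruct (Req_dec x y) as [E|NE]. subst. lra.
  apply le_eps_close. intros e He.
  assert (He3 : e / (6 * (Rabs m + 1)) > 0) by (apply Rdiv_lt_0_compat; [lra| pose proof (Rabs_pos m); lra]).
  destruct (hderiv_cont f a b x (d x) (Hd x ltac:(lra)) (e/3) ltac:(lra)) as [d1 [Hd1 K1]].
  destruct (hderiv_cont f a b y (d y) (Hd y ltac:(lra)) (e/3) ltac:(lra)) as [d2 [Hd2 K2]].
  set (s := Rmin (Rmin d1 d2) (Rmin ((y - x) / 3) (e / (6 * (Rabs m + 1))))/2).
  assert (Hmin : 0 < Rmin (Rmin d1 d2) (Rmin ((y - x) / 3) (e / (6 * (Rabs m + 1)))))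
    by (apply Rmin_pos; apply Rmin_pos; lra).
  pose proof (Rmin_l (Rmin d1 d2) (Rmin ((y - x) / 3) (e / (6 * (Rabs m + 1))))).
  pose proof (Rmin_r (Rmin d1 d2) (Rmin ((y - x) / 3) (e / (6 * (Rabs m + 1))))).
  pose proof (Rmin_l d1 d2). pose proof (Rmin_r d1 d2).
  pose proof (Rmin_l ((y - x) / 3) (e / (6 * (Rabs m + 1)))).
  pose proof (Rmin_r ((y - x) / 3) (e / (6 * (Rabs m + 1)))).
  assert (Hs : 0 < s) by (unfold s; lra).
  assert (Hs1 : s < d1) by (unfold s; lra).
  assert (Hs2 : s < d2) by (unfold s; lra).
  assert (Hs3 : s < (y - x) / 3) by (unfold s; lra).
  assert (Hs4 : s < e / (6 * (Rabs m + 1))) by (unfold s; lra).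
  destruct (MVT_cor2 f d (x + s) (y - s)) as [c [Hc Hc']]. lra.
  intros c Hc. apply (hderiv_interior f a b); [lra| apply Hd; lra].
  assert (E1 : Rabs (f (x + s) - f x) < e / 3) by (apply K1; [lra| rewrite Rabs_right; lra]).
  assert (E2 : Rabs (f (y - s) - f y) < e / 3) by (apply K2; [lra| rewrite Rabs_left; lra]).
  assert (Hdc : m <= d c) by (apply Hm; lra).
  assert (Hm1 : m * (y - s - (x + s)) <= f (y - s) - f (x + s)) by (rewrite Hc; apply Rmult_le_compat_r; lra).
  assert (Hm2 : Rabs (m * (2 * s)) <= e / 3).
  { rewrite Rabs_mult. rewrite (Rabs_right (2 * s)) by lra.
    apply Rle_trans with ((Rabs m + 1) * (2 * (e / (6 * (Rabs m + 1))))).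
    apply Rmult_le_compat; try apply Rabs_pos; lra.
    right. field. pose proof (Rabs_pos m); lra. }
  apply Rabs_def2 in E1. apply Rabs_def2 in E2. 
  pose proof (Rle_abs (m * (2 * s))). pose proof (Rle_abs (- (m * (2 * s)))). rewrite Rabs_Ropp in H6.
  lra.
Qed.

Lemma is_hderiv_ext f g a b x l : (forall y, f y = g y) -> is_hderiv f a b x l -> is_hderiv g a b x l.
Proof.
  intros E H. replace g with f; auto. apply functional_extensionality. exact E.
Qed.

Lemma mvi_upper f d a b M : a < b ->
  (forall x, a <= x <= b -> is_hderiv f a b x (d x)) ->
  (forall x, a <= x <= b -> d x <= M) ->
  forall x y, a <= x -> x <= y -> y <= b -> f y - f x <= M * (y - x).
Proof.
  intros Hab Hd HM x y Hx Hxy Hy.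
  pose proof (mvi_lower (fun z => -1 * f z + 0 * f z) (fun z => -1 * d z + 0 * d z) a b (- M) Hab) as K.
  assert (- M * (y - x) <= (-1 * f y + 0 * f y) - (-1 * f x + 0 * f x)).
  { apply K; auto. intros z Hz. apply hderiv_lin; apply Hd; auto.
    intros z Hz. specialize (HM z Hz). lra. }
  lra.
Qed.

Lemma U1_Dm f : U1 f -> forall x, -1 <= x <= 0 -> is_hderiv f (-1) 0 x (Dm f x).
Proof.
  intros [[_ [H _]] _] x Hx. apply hD_spec. apply (H x Hx).
Qed.

Lemma U1_Dp f : U1 f -> forall x, 0 <= x <= 1 -> is_hderiv f 0 1 x (Dp f x).
Proof.
  intros [[_ [_ [H _]]] _] x Hx. apply hD_spec. apply (H x Hx).
Qed.

Lemma U1_range f : U1 f -> forall y, -1 <= y <= 1 -> -1 <= f y <= 1.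
Proof.
  intros HU y Hy. pose proof HU as [_ [Hm1 [H1 [[l1 [Hl1 K1]] [[l2 [Hl2 K2]] H0]]]]].
  destruct (Rle_dec y 0).
  - assert (A := mvi_lower f (Dm f) (-1) 0 l1 ltac:(lra) (U1_Dm f HU) ltac:(intros; specialize (K1 x H); lra)).
    pose proof (A (-1) y ltac:(lra) ltac:(lra) ltac:(lra)).
    pose proof (A y 0 ltac:(lra) ltac:(lra) ltac:(lra)).
    split; nra.
  - assert (A := mvi_upper f (Dp f) 0 1 l2 ltac:(lra) (U1_Dp f HU) ltac:(intros; specialize (K2 x H); lra)).
    pose proof (A y 1 ltac:(lra) ltac:(lra) ltac:(lra)).
    pose proof (A 0 y ltac:(lra) ltac:(lra) ltac:(lra)).
    split; nra.
Qed.

Definition wcont (g : R -> R) a b x :=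
  forall e, e > 0 -> exists d, d > 0 /\ forall y, a <= y <= b -> Rabs (y - x) < d -> Rabs (g y - g x) < e.

Lemma evt_bound g a b : a <= b -> (forall x, a <= x <= b -> wcont g a b x) ->
  exists M, forall x, a <= x <= b -> Rabs (g x) <= M.
Proof.
  intros Hab Hc.
  set (h := fun x => g (Rmax a (Rmin x b))).
  assert (Hh : forall c, a <= c <= b -> continuity_pt h c).
  { intros c Hcab e He. destruct (Hc c Hcab e He) as [d [Hd K]].
    exists d. split; auto. intros x [_ Hx]. unfold dist in *; simpl in *; unfold R_dist in *.
    unfold h. replace (Rmax a (Rmin c b)) with c.
    2: { rewrite Rmin_left by lra. rewrite Rmax_right by lra. auto. }
    apply K. split. apply Rmax_l. apply Rmax_lub. lra. apply Rmin_r.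
    unfold Rmax, Rmin. destruct (Rle_dec x b); destruct (Rle_dec a _);
      apply Rabs_def2 in Hx; apply Rabs_def1; lra. }
  destruct (continuity_ab_maj h a b Hab Hh) as [M1 [HM1 _]].
  destruct (continuity_ab_min h a b Hab Hh) as [M2 [HM2 _]].
  exists (Rabs (h M1) + Rabs (h M2)). intros x Hx.
  assert (E : h x = g x) by (unfold h; rewrite Rmin_left by lra; rewrite Rmax_right by lra; auto).
  rewrite <- E. specialize (HM1 x Hx). specialize (HM2 x Hx).
  pose proof (Rle_abs (h M1)). pose proof (Rle_abs (- h M2)). rewrite Rabs_Ropp in *.
  pose proof (Rabs_pos (h M1)); pose proof (Rabs_pos (h M2)).
  unfold Rabs at 1. destruct (Rcase_abs (h x)); lra.
Qed.

Lemma B1_wcont f : Defs.B1 f -> forall x, -1 <= x <= 1 -> wcont f (-1) 1 x.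
Proof.
  intros [H _] x Hx e He. destruct (proj1 (within_eps f _ x (f x)) (H x Hx) e He) as [d [Hd K]].
  exists d; split; auto.
Qed.

Lemma C1_wcont f a b : C1_on f a b -> forall x, a <= x <= b -> wcont (hD f a b) a b x.
Proof.
  intros H x Hx e He. destruct (proj1 (within_eps _ _ x _) (proj2 (H x Hx)) e He) as [d [Hd K]].
  exists d; split; auto.
Qed.

Definition Lm {T} (Fi : (T -> Prop) -> Prop) (f : T -> R) (l : R) :=
  forall e, e > 0 -> Fi (fun x => Rabs (f x - l) < e).

Section LmS.
Context {T : Type} {Fi : (T -> Prop) -> Prop} {FF : Filter Fi}.

Lemma Lm_const c : Lm Fi (fun _ => c) c.
Proof. intros e He. apply filter_forall. intros; rewrite Rminus_eq_0, Rabs_R0; lra. Qed.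

Lemma Lm_ext f g l : Fi (fun x => f x = g x) -> Lm Fi f l -> Lm Fi g l.
Proof.
  intros E H e He. eapply filter_imp. 2: apply filter_and; [exact E| exact (H e He)].
  intros x [E1 E2]. rewrite <- E1; auto.
Qed.

Lemma Lm_plus f g a b : Lm Fi f a -> Lm Fi g b -> Lm Fi (fun x => f x + g x) (a + b).
Proof.
  intros Hf Hg e He. eapply filter_imp. 2: apply filter_and; [exact (Hf (e/2) ltac:(lra))| exact (Hg (e/2) ltac:(lra))].
  intros x [E1 E2]. replace (f x + g x - (a + b)) with ((f x - a) + (g x - b)) by ring.
  eapply Rle_lt_trans. apply Rabs_triang. lra.
Qed.

Lemma Lm_opp f a : Lm Fi f a -> Lm Fi (fun x => - f x) (- a).
Proof.
  intros Hf e He. eapply filter_imp. 2: exact (Hf e He).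
  intros x E. replace (- f x - - a) with (- (f x - a)) by ring. rewrite Rabs_Ropp; auto.
Qed.

Lemma Lm_minus f g a b : Lm Fi f a -> Lm Fi g b -> Lm Fi (fun x => f x - g x) (a - b).
Proof. intros Hf Hg. apply (Lm_plus f (fun x => - g x) a (- b) Hf (Lm_opp g b Hg)). Qed.

Lemma Lm_bound f a : Lm Fi f a -> Fi (fun x => Rabs (f x) < Rabs a + 1).
Proof.
  intros H. eapply filter_imp. 2: exact (H 1 ltac:(lra)).
  intros x E. replace (f x) with ((f x - a) + a) by ring.
  eapply Rle_lt_trans. apply Rabs_triang. lra.
Qed.

Lemma Lm_mult f g a b : Lm Fi f a -> Lm Fi g b -> Lm Fi (fun x => f x * g x) (a * b).
Proof.
  intros Hf Hg e He.
  set (K := Rabs a + Rabs b + 2).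
  assert (HK : K > 0) by (unfold K; pose proof (Rabs_pos a); pose proof (Rabs_pos b); lra).
  set (e' := Rmin 1 (e / (4 * K))).
  assert (He' : e' > 0) by (unfold e'; apply Rmin_pos; [lra| apply Rdiv_lt_0_compat; lra]).
  assert (He1 : e' <= 1) by apply Rmin_l.
  assert (He2 : e' <= e / (4 * K)) by apply Rmin_r.
  eapply filter_imp. 2: apply filter_and; [exact (Hf e' He')| exact (Hg e' He')].
  intros x [E1 E2].
  replace (f x * g x - a * b) with ((f x - a) * g x + a * (g x - b)) by ring.
  eapply Rle_lt_trans. apply Rabs_triang. rewrite !Rabs_mult.
  assert (Hgx : Rabs (g x) <= Rabs b + 1).
  { replace (g x) with ((g x - b) + b) by ring. eapply Rle_trans. apply Rabs_triang. lra. }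
  assert (Rabs (f x - a) * Rabs (g x) <= e' * K).
  { apply Rmult_le_compat; try apply Rabs_pos; try lra. unfold K; pose proof (Rabs_pos a); lra. }
  assert (Rabs a * Rabs (g x - b) <= K * e').
  { apply Rmult_le_compat; try apply Rabs_pos; try lra. unfold K; pose proof (Rabs_pos b); lra. }
  assert (e' * K <= e / 4).
  { apply Rle_trans with (e / (4 * K) * K). apply Rmult_le_compat_r; lra.
    right; field; lra. }
  lra.
Qed.

Lemma Lm_away f a : Lm Fi f a -> a <> 0 -> Fi (fun x => Rabs (f x) > Rabs a / 2).
Proof.
  intros H Ha. assert (Rabs a > 0) by (apply Rabs_pos_lt; auto).
  eapply filter_imp. 2: exact (H (Rabs a / 2) ltac:(lra)).
  intros x E. 
  assert (Rabs a <= Rabs (f x) + Rabs (f x - a)).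
  { replace a with (f x - (f x - a)) at 1 by ring. eapply Rle_trans. apply Rabs_triang.
    rewrite Rabs_Ropp; lra. }
  lra.
Qed.

Lemma Lm_inv f a : Lm Fi f a -> a <> 0 -> Lm Fi (fun x => / f x) (/ a).
Proof.
  intros H Ha e He. assert (Hap : Rabs a > 0) by (apply Rabs_pos_lt; auto).
  set (e' := e * (Rabs a * Rabs a) / 2).
  assert (He' : e' > 0) by (unfold e'; apply Rdiv_lt_0_compat; [apply Rmult_lt_0_compat; nra| lra]).
  eapply filter_imp. 2: apply filter_and; [exact (Lm_away f a H Ha)| exact (H e' He')].
  intros x [E1 E2]. assert (Hfx : f x <> 0) by (intro Z; rewrite Z, Rabs_R0 in E1; lra).
  replace (/ f x - / a) with (- (f x - a) / (f x * a)) by (field; auto).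
  unfold Rdiv. rewrite Rabs_mult, Rabs_Ropp, Rabs_Rinv, Rabs_mult.
  2: apply Rmult_integral_contrapositive_currified; auto.
  apply Rmult_lt_reg_r with (Rabs (f x) * Rabs a). apply Rmult_lt_0_compat; lra.
  rewrite Rmult_assoc, Rinv_l. 2: apply Rgt_not_eq; apply Rmult_lt_0_compat; lra.
  apply Rlt_le_trans with e'. lra. unfold e'.
  apply Rle_trans with (e * (Rabs a / 2 * Rabs a)). right; field.
  apply Rmult_le_compat_l. lra. apply Rmult_le_compat_r; lra.
Qed.

Lemma Lm_div f g a b : Lm Fi f a -> Lm Fi g b -> b <> 0 -> Lm Fi (fun x => f x / g x) (a / b).
Proof. intros Hf Hg Hb. apply Lm_mult; auto. apply Lm_inv; auto. Qed.

Lemma Lm_lt f a c : Lm Fi f a -> a < c -> Fi (fun x => f x < c).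
Proof.
  intros H Hc. eapply filter_imp. 2: exact (H (c - a) ltac:(lra)).
  intros x E. apply Rabs_def2 in E. lra.
Qed.

Lemma Lm_gt f a c : Lm Fi f a -> c < a -> Fi (fun x => c < f x).
Proof.
  intros H Hc. eapply filter_imp. 2: exact (H (a - c) ltac:(lra)).
  intros x E. apply Rabs_def2 in E. lra.
Qed.

End LmS.

Lemma hD_comb f1 f0 g a b x l1 l0 l2 h : a < b -> a <= x <= b -> h <> 0 ->
  is_hderiv f1 a b x l1 -> is_hderiv f0 a b x l0 -> is_hderiv g a b x l2 ->
  hD (fun y => (f1 y - f0 y) / h - g y) a b x = (l1 - l0) / h - l2.
Proof.
  intros Hab Hx Hh H1 H0 H2. apply hD_eq; auto.
  pose proof (hderiv_lin f1 f0 a b x l1 l0 (/ h) (- / h) H1 H0) as K.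
  pose proof (hderiv_lin _ g a b x _ l2 1 (-1) K H2) as K2.
  replace ((l1 - l0) / h - l2) with (1 * (/ h * l1 + - / h * l0) + -1 * l2) by (field; auto).
  eapply is_hderiv_ext. 2: exact K2. intros y. simpl. field; auto.
Qed.

Lemma Df_ge1 f z : U1 f -> -1 <= z <= 1 -> 1 < Rabs (Df f z).
Proof.
  intros [_ [_ [_ [[l1 [Hl1 K1]] [[l2 [Hl2 K2]] _]]]]] Hz. unfold Df.
  destruct (Rle_dec z 0).
  - specialize (K1 z ltac:(lra)). rewrite Rabs_right; lra.
  - specialize (K2 z ltac:(lra)). rewrite Rabs_left; lra.
Qed.

Lemma Df_neq0 f z : U1 f -> -1 <= z <= 1 -> Df f z <> 0.
Proof. intros H Hz E. pose proof (Df_ge1 f z H Hz). rewrite E, Rabs_R0 in H0. lra. Qed.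

Lemma iter_I1 f n y : U1 f -> -1 <= y <= 1 -> -1 <= Nat.iter n f y <= 1.
Proof.
  intros H Hy. induction n; simpl; auto. apply U1_range; auto.
Qed.

Lemma Dfn_neq0 f n y : U1 f -> -1 <= y <= 1 -> Dfn f n y <> 0.
Proof.
  intros H Hy. induction n; simpl. lra.
  apply Rmult_integral_contrapositive_currified; auto. apply Df_neq0; auto. apply iter_I1; auto.
Qed.

Definition BS (f v : R -> R) (n : nat) (y : R) : R :=
  sumR n (fun i => v (Nat.iter i f y) / Dfn f i (f y)).

Section Fam.
Variables (F G : R -> R -> R) (delta : R).
Hypothesis HF : C1_family F G delta.

Lemma Hdelta : 0 < delta.
Proof. apply HF. Qed.

Lemma FU t : Rabs t < delta -> U1 (F t).
Proof. apply HF. Qed.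

Lemma GB t : Rabs t < delta -> Defs.B1 (G t).
Proof. apply HF. Qed.

Lemma F0U : U1 (F 0).
Proof. apply FU. rewrite Rabs_R0. apply Hdelta. Qed.

Lemma G0B : Defs.B1 (G 0).
Proof. apply GB. rewrite Rabs_R0. apply Hdelta. Qed.

Lemma Fderiv t0 : Rabs t0 < delta -> forall e, e > 0 -> exists eta, eta > 0 /\
  forall h, h <> 0 -> Rabs h < eta -> Rabs (t0 + h) < delta ->
   (forall y, -1 <= y <= 1 -> Rabs ((F (t0 + h) y - F t0 y) / h - G t0 y) <= e) /\
   (forall y, -1 <= y <= 0 -> Rabs ((Dm (F (t0 + h)) y - Dm (F t0) y) / h - Dm (G t0) y) <= e) /\
   (forall y, 0 <= y <= 1 -> Rabs ((Dp (F (t0 + h)) y - Dp (F t0) y) / h - Dp (G t0) y) <= e).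
Proof.
  intros Ht0 e He. destruct HF as [_ [_ [_ [H3 _]]]].
  destruct (H3 t0 Ht0 e He) as [eta [Heta K]]. exists eta; split; auto.
  intros h Hh Hh1 Hh2. destruct (K h Hh Hh1 Hh2) as [K1 K2].
  pose proof (FU _ Hh2) as U1. pose proof (FU _ Ht0) as U0. pose proof (GB _ Ht0) as BG.
  split; [| split].
  - intros y Hy. destruct (Rle_dec y 0). apply (K1 y ltac:(lra)). apply (K2 y ltac:(lra)).
  - intros y Hy. destruct (K1 y Hy) as [_ E]. unfold Dm in E. rewrite (hD_comb _ _ _ _ _ _ (Dm (F (t0 + h)) y) (Dm (F t0) y) (Dm (G t0) y)) in E; auto; try lra.
    apply U1_Dm; auto. apply U1_Dm; auto.
    apply hD_spec. destruct BG as [_ [C _]]. apply (C y Hy).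
  - intros y Hy. destruct (K2 y Hy) as [_ E]. unfold Dp in E. rewrite (hD_comb _ _ _ _ _ _ (Dp (F (t0 + h)) y) (Dp (F t0) y) (Dp (G t0) y)) in E; auto; try lra.
    apply U1_Dp; auto. apply U1_Dp; auto.
    apply hD_spec. destruct BG as [_ [_ [C _]]]. apply (C y Hy).
Qed.

Lemma Gcont t0 : Rabs t0 < delta -> forall e, e > 0 -> exists eta, eta > 0 /\
  forall s, Rabs s < delta -> Rabs (s - t0) < eta -> forall y, -1 <= y <= 1 -> Rabs (G s y - G t0 y) <= e.
Proof.
  intros Ht0 e He. destruct HF as [_ [_ [_ [_ H4]]]].
  destruct (H4 t0 Ht0 e He) as [eta [Heta K]]. exists eta; split; auto.
  intros s Hs Hst y Hy. destruct (K s Hs Hst) as [K1 K2].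
  destruct (Rle_dec y 0). apply (K1 y ltac:(lra)). apply (K2 y ltac:(lra)).
Qed.

End Fam.


Lemma quot_bound A B C h V : h <> 0 -> Rabs ((A - B) / h - C) <= 1 -> Rabs C <= V ->
  Rabs (A - B) <= Rabs h * (V + 1).
Proof.
  intros Hh H HC.
  replace (A - B) with (((A - B) / h - C + C) * h) by (field; auto).
  rewrite Rabs_mult, Rmult_comm. apply Rmult_le_compat_l. apply Rabs_pos.
  eapply Rle_trans. apply Rabs_triang. lra.
Qed.

Lemma abs_le x a : Rabs x <= a -> - a <= x <= a.
Proof. intros H. unfold Rabs in H. destruct (Rcase_abs x); lra. Qed.

Section Fam2.
Variables (F G : R -> R -> R) (delta : R).
Hypothesis HF : C1_family F G delta.

Lemma near0 : forall e, e > 0 -> exists tau, tau > 0 /\ tau <= delta /\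
  forall t, Rabs t < tau ->
   (forall y, -1 <= y <= 1 -> Rabs (F t y - F 0 y) <= e /\ Rabs (G t y - G 0 y) <= e) /\
   (forall y, -1 <= y <= 0 -> Rabs (Dm (F t) y - Dm (F 0) y) <= e) /\
   (forall y, 0 <= y <= 1 -> Rabs (Dp (F t) y - Dp (F 0) y) <= e).
Proof.
  intros e He.
  pose proof (Hdelta F G delta HF) as Hd.
  pose proof (G0B F G delta HF) as BG.
  destruct (evt_bound (G 0) (-1) 1 ltac:(lra) (B1_wcont _ BG)) as [V0 HV0].
  destruct (evt_bound (Dm (G 0)) (-1) 0 ltac:(lra) (C1_wcont _ _ _ (proj1 (proj2 BG)))) as [Vm HVm].
  destruct (evt_bound (Dp (G 0)) 0 1 ltac:(lra) (C1_wcont _ _ _ (proj1 (proj2 (proj2 BG))))) as [Vp HVp].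
  set (W := Rabs V0 + Rabs Vm + Rabs Vp + 1).
  assert (HW : W > 0) by (unfold W; pose proof (Rabs_pos V0); pose proof (Rabs_pos Vm); pose proof (Rabs_pos Vp); lra).
  assert (H0d : Rabs 0 < delta) by (rewrite Rabs_R0; lra).
  destruct (Fderiv F G delta HF 0 H0d 1 ltac:(lra)) as [eta [Heta K]].
  destruct (Gcont F G delta HF 0 H0d e He) as [eta2 [Heta2 K2]].
  set (tau := Rmin (Rmin eta eta2) (Rmin delta (e / W))).
  assert (Htau : tau > 0) by (unfold tau; apply Rmin_pos; apply Rmin_pos; try lra; apply Rdiv_lt_0_compat; lra).
  pose proof (Rmin_l (Rmin eta eta2) (Rmin delta (e / W))).
  pose proof (Rmin_r (Rmin eta eta2) (Rmin delta (e / W))).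
  pose proof (Rmin_l eta eta2). pose proof (Rmin_r eta eta2).
  pose proof (Rmin_l delta (e / W)). pose proof (Rmin_r delta (e / W)).
  exists tau. split; auto. split. unfold tau; lra.
  intros t Ht.
  assert (HtW : Rabs t * W <= e).
  { apply Rle_trans with (e / W * W). apply Rmult_le_compat_r; unfold tau in *; lra. right; field; lra. }
  destruct (Req_dec t 0) as [E|Ht0].
  { subst. split; [|split]; intros; try split; rewrite Rminus_eq_0, Rabs_R0; lra. }
  assert (Ht1 : Rabs t < eta) by (unfold tau in *; lra).
  assert (Ht2 : Rabs (0 + t) < delta) by (rewrite Rplus_0_l; unfold tau in *; lra).
  destruct (K t Ht0 Ht1 Ht2) as [K1 [K3 K4]]. rewrite Rplus_0_l in K1, K3, K4.
  assert (Hpos : Rabs t > 0) by (apply Rabs_pos_lt; auto).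
  split; [| split].
  - intros y Hy. split.
    + eapply Rle_trans. apply (quot_bound _ _ _ t (Rabs V0) Ht0 (K1 y Hy)).
      eapply Rle_trans. apply HV0; auto. apply Rle_abs.
      eapply Rle_trans. 2: exact HtW. apply Rmult_le_compat_l. lra.
      unfold W; pose proof (Rabs_pos Vm); pose proof (Rabs_pos Vp); lra.
    + apply K2; auto; try (unfold tau in *; lra); rewrite Rminus_0_r; unfold tau in *; lra.
  - intros y Hy.
      eapply Rle_trans. apply (quot_bound _ _ _ t (Rabs Vm) Ht0 (K3 y Hy)).
      eapply Rle_trans. apply HVm; auto. apply Rle_abs.
      eapply Rle_trans. 2: exact HtW. apply Rmult_le_compat_l. lra.
      unfold W; pose proof (Rabs_pos V0); pose proof (Rabs_pos Vp); lra.
  - intros y Hy.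
      eapply Rle_trans. apply (quot_bound _ _ _ t (Rabs Vp) Ht0 (K4 y Hy)).
      eapply Rle_trans. apply HVp; auto. apply Rle_abs.
      eapply Rle_trans. 2: exact HtW. apply Rmult_le_compat_l. lra.
      unfold W; pose proof (Rabs_pos Vm); pose proof (Rabs_pos V0); lra.
Qed.


Lemma unif : exists lam V tau, lam > 1 /\ V > 0 /\ tau > 0 /\ tau <= delta /\
  forall t, Rabs t < tau -> forall z, -1 <= z <= 1 -> lam <= Rabs (Df (F t) z) /\ Rabs (G t z) <= V.
Proof.
  pose proof (F0U F G delta HF) as [_ [_ [_ [[l1 [Hl1 K1]] [[l2 [Hl2 K2]] _]]]]].
  pose proof (G0B F G delta HF) as BG.
  destruct (evt_bound (G 0) (-1) 1 ltac:(lra) (B1_wcont _ BG)) as [V0 HV0].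
  set (e := Rmin (Rmin (l1 - 1) (- 1 - l2)) 1 / 2).
  assert (Hm : 0 < Rmin (Rmin (l1 - 1) (- 1 - l2)) 1) by (apply Rmin_pos; [apply Rmin_pos|]; lra).
  pose proof (Rmin_l (Rmin (l1 - 1) (- 1 - l2)) 1). pose proof (Rmin_r (Rmin (l1 - 1) (- 1 - l2)) 1).
  pose proof (Rmin_l (l1 - 1) (- 1 - l2)). pose proof (Rmin_r (l1 - 1) (- 1 - l2)).
  destruct (near0 e ltac:(unfold e; lra)) as [tau [Htau [Htd K]]].
  exists (1 + e), (Rabs V0 + 1), tau. split. unfold e; lra. split. pose proof (Rabs_pos V0); lra.
  split; auto. split; auto. intros t Ht z Hz. destruct (K t Ht) as [Ka [Kb Kc]].
  split.
  - unfold Df. destruct (Rle_dec z 0).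
    + specialize (Kb z ltac:(lra)). specialize (K1 z ltac:(lra)). apply abs_le in Kb.
      rewrite Rabs_right; unfold e in *; lra.
    + specialize (Kc z ltac:(lra)). specialize (K2 z ltac:(lra)). apply abs_le in Kc.
      rewrite Rabs_left; unfold e in *; lra.
  - destruct (Ka z Hz) as [_ Kg]. specialize (HV0 z Hz).
    replace (G t z) with ((G t z - G 0 z) + G 0 z) by ring. eapply Rle_trans. apply Rabs_triang.
    pose proof (Rle_abs V0). unfold e in *; lra.
Qed.

Section LmF.
Context {T : Type} {Fi : (T -> Prop) -> Prop} {FF : Filter Fi}.
Variable tt : T -> R.
Hypothesis Htt : Lm Fi tt 0.

Lemma ev_delta : Fi (fun x => Rabs (tt x) < delta).
Proof.
  eapply filter_imp. 2: apply (Htt delta (Hdelta F G delta HF)). intros x E. replace (tt x) with (tt x - 0) by ring; exact E.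
Qed.

Lemma ev_tau tau : tau > 0 -> Fi (fun x => Rabs (tt x) < tau).
Proof.
  intros H. eapply filter_imp. 2: apply (Htt tau H). intros x E. replace (tt x) with (tt x - 0) by ring; exact E.
Qed.

Lemma LF (yy : T -> R) y0 : Lm Fi yy y0 -> Fi (fun x => -1 <= yy x <= 1) -> -1 <= y0 <= 1 ->
  Lm Fi (fun x => F (tt x) (yy x)) (F 0 y0).
Proof.
  intros Hy HI Hy0 e He.
  destruct (near0 (e/2) ltac:(lra)) as [tau [Htau [_ K]]].
  destruct (B1_wcont _ (proj1 (F0U F G delta HF)) y0 Hy0 (e/2) ltac:(lra)) as [d [Hd Kd]].
  eapply filter_imp. 2: apply filter_and; [apply (ev_tau tau Htau)| apply filter_and; [exact HI| exact (Hy d Hd)]].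
  intros x [E1 [E2 E3]].
  destruct (K _ E1) as [Ka _]. destruct (Ka (yy x) E2) as [Kf _]. specialize (Kd (yy x) E2 E3).
  replace (F (tt x) (yy x) - F 0 y0) with ((F (tt x) (yy x) - F 0 (yy x)) + (F 0 (yy x) - F 0 y0)) by ring.
  eapply Rle_lt_trans. apply Rabs_triang. lra.
Qed.

Lemma LG (yy : T -> R) y0 : Lm Fi yy y0 -> Fi (fun x => -1 <= yy x <= 1) -> -1 <= y0 <= 1 ->
  Lm Fi (fun x => G (tt x) (yy x)) (G 0 y0).
Proof.
  intros Hy HI Hy0 e He.
  destruct (near0 (e/2) ltac:(lra)) as [tau [Htau [_ K]]].
  destruct (B1_wcont _ (G0B F G delta HF) y0 Hy0 (e/2) ltac:(lra)) as [d [Hd Kd]].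
  eapply filter_imp. 2: apply filter_and; [apply (ev_tau tau Htau)| apply filter_and; [exact HI| exact (Hy d Hd)]].
  intros x [E1 [E2 E3]].
  destruct (K _ E1) as [Ka _]. destruct (Ka (yy x) E2) as [_ Kg]. specialize (Kd (yy x) E2 E3).
  replace (G (tt x) (yy x) - G 0 y0) with ((G (tt x) (yy x) - G 0 (yy x)) + (G 0 (yy x) - G 0 y0)) by ring.
  eapply Rle_lt_trans. apply Rabs_triang. lra.
Qed.

Lemma LDm (yy : T -> R) y0 : Lm Fi yy y0 -> Fi (fun x => -1 <= yy x <= 0) -> -1 <= y0 <= 0 ->
  Lm Fi (fun x => Dm (F (tt x)) (yy x)) (Dm (F 0) y0).
Proof.
  intros Hy HI Hy0 e He.
  destruct (near0 (e/2) ltac:(lra)) as [tau [Htau [_ K]]].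
  destruct (C1_wcont _ _ _ (proj1 (proj2 (proj1 (F0U F G delta HF)))) y0 Hy0 (e/2) ltac:(lra)) as [d [Hd Kd]].
  eapply filter_imp. 2: apply filter_and; [apply (ev_tau tau Htau)| apply filter_and; [exact HI| exact (Hy d Hd)]].
  intros x [E1 [E2 E3]].
  destruct (K _ E1) as [_ [Ka _]]. specialize (Ka (yy x) E2). specialize (Kd (yy x) E2 E3).
  fold (Dm (F 0) (yy x)) in Kd. fold (Dm (F 0) y0) in Kd.
  replace (Dm (F (tt x)) (yy x) - Dm (F 0) y0) with ((Dm (F (tt x)) (yy x) - Dm (F 0) (yy x)) + (Dm (F 0) (yy x) - Dm (F 0) y0)) by ring.
  eapply Rle_lt_trans. apply Rabs_triang. lra.
Qed.

Lemma LDp (yy : T -> R) y0 : Lm Fi yy y0 -> Fi (fun x => 0 <= yy x <= 1) -> 0 <= y0 <= 1 ->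
  Lm Fi (fun x => Dp (F (tt x)) (yy x)) (Dp (F 0) y0).
Proof.
  intros Hy HI Hy0 e He.
  destruct (near0 (e/2) ltac:(lra)) as [tau [Htau [_ K]]].
  destruct (C1_wcont _ _ _ (proj1 (proj2 (proj2 (proj1 (F0U F G delta HF))))) y0 Hy0 (e/2) ltac:(lra)) as [d [Hd Kd]].
  eapply filter_imp. 2: apply filter_and; [apply (ev_tau tau Htau)| apply filter_and; [exact HI| exact (Hy d Hd)]].
  intros x [E1 [E2 E3]].
  destruct (K _ E1) as [_ [_ Ka]]. specialize (Ka (yy x) E2). specialize (Kd (yy x) E2 E3).
  fold (Dp (F 0) (yy x)) in Kd. fold (Dp (F 0) y0) in Kd.
  replace (Dp (F (tt x)) (yy x) - Dp (F 0) y0) with ((Dp (F (tt x)) (yy x) - Dp (F 0) (yy x)) + (Dp (F 0) (yy x) - Dp (F 0) y0)) by ring.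
  eapply Rle_lt_trans. apply Rabs_triang. lra.
Qed.

Lemma LDf (yy : T -> R) y0 : Lm Fi yy y0 -> Fi (fun x => -1 <= yy x <= 1) -> -1 <= y0 <= 1 -> y0 <> 0 ->
  Lm Fi (fun x => Df (F (tt x)) (yy x)) (Df (F 0) y0).
Proof.
  intros Hy HI Hy0 Hn. unfold Df at 2. destruct (Rle_dec y0 0).
  - assert (Hlt : y0 < 0) by lra.
    apply (Lm_ext (fun x => Dm (F (tt x)) (yy x))).
    + eapply filter_imp. 2: apply (Lm_lt _ _ 0 Hy Hlt). intros x E. unfold Df.
      destruct (Rle_dec (yy x) 0); auto; lra.
    + apply LDm; auto; try lra. eapply filter_imp. 2: apply filter_and; [exact HI| apply (Lm_lt _ _ 0 Hy Hlt)].
      intros x [E1 E2]; lra.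
  - assert (Hlt : 0 < y0) by lra.
    apply (Lm_ext (fun x => Dp (F (tt x)) (yy x))).
    + eapply filter_imp. 2: apply (Lm_gt _ _ 0 Hy Hlt). intros x E. unfold Df.
      destruct (Rle_dec (yy x) 0); auto; lra.
    + apply LDp; auto; try lra. eapply filter_imp. 2: apply filter_and; [exact HI| apply (Lm_gt _ _ 0 Hy Hlt)].
      intros x [E1 E2]; lra.
Qed.

Lemma Liter (yy : T -> R) y0 n : Lm Fi yy y0 -> Fi (fun x => -1 <= yy x <= 1) -> -1 <= y0 <= 1 ->
  Lm Fi (fun x => Nat.iter n (F (tt x)) (yy x)) (Nat.iter n (F 0) y0) /\ Fi (fun x => -1 <= Nat.iter n (F (tt x)) (yy x) <= 1).
Proof.
  intros Hy HI Hy0. induction n.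
  - simpl. auto.
  - destruct IHn as [L1 L2]. simpl. split.
    + apply (LF (fun x => Nat.iter n (F (tt x)) (yy x))); auto.
      apply iter_I1; auto. apply (F0U F G delta HF).
    + eapply filter_imp. 2: apply filter_and; [exact L2| exact ev_delta].
      intros x [E1 E2]. apply U1_range; auto. apply (FU F G delta HF); auto.
Qed.

Lemma LDfn (yy : T -> R) y0 n : Lm Fi yy y0 -> Fi (fun x => -1 <= yy x <= 1) -> -1 <= y0 <= 1 ->
  (forall j, (j < n)%nat -> Nat.iter j (F 0) y0 <> 0) ->
  Lm Fi (fun x => Dfn (F (tt x)) n (yy x)) (Dfn (F 0) n y0).
Proof.
  intros Hy HI Hy0 Hz. induction n.
  - simpl. apply Lm_const.
  - simpl. apply Lm_mult. apply IHn. intros; apply Hz; lia.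
    destruct (Liter yy y0 n Hy HI Hy0) as [L1 L2].
    apply (LDf (fun x => Nat.iter n (F (tt x)) (yy x))); auto.
    apply iter_I1; auto. apply (F0U F G delta HF).
Qed.

Lemma LBS (yy : T -> R) y0 n : Lm Fi yy y0 -> Fi (fun x => -1 <= yy x <= 1) -> -1 <= y0 <= 1 ->
  (forall j, (S j < n)%nat -> Nat.iter j (F 0) (F 0 y0) <> 0) ->
  Lm Fi (fun x => BS (F (tt x)) (G (tt x)) n (yy x)) (BS (F 0) (G 0) n y0).
Proof.
  intros Hy HI Hy0 Hz. pose proof (F0U F G delta HF) as U0. induction n.
  - unfold BS. simpl. apply Lm_const.
  - unfold BS in *. simpl. apply Lm_plus. apply IHn. intros; apply Hz; lia.
    destruct (Liter yy y0 n Hy HI Hy0) as [L1 L2].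
    apply Lm_div.
    + apply (LG (fun x => Nat.iter n (F (tt x)) (yy x))); auto. apply iter_I1; auto.
    + apply (LDfn (fun x => F (tt x) (yy x))).
      * apply LF; auto.
      * eapply filter_imp. 2: apply filter_and; [exact HI| exact ev_delta].
        intros x [E1 E2]. apply U1_range; auto. apply (FU F G delta HF); auto.
      * apply U1_range; auto.
      * intros j Hj; apply Hz; lia.
    + apply Dfn_neq0; auto. apply U1_range; auto.
Qed.

End LmF.

End Fam2.


Lemma lap_hderiv f y0 : U1 f -> -1 <= y0 <= 1 -> y0 <> 0 ->
  exists a b, a < b /\ a <= y0 <= b /\ is_hderiv f a b y0 (Df f y0) /\
   forall y, -1 <= y <= 1 -> Rabs (y - y0) < Rabs y0 -> a <= y <= b.
Proof.
  intros HU Hy Hn. unfold Df. destruct (Rle_dec y0 0).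
  - exists (-1), 0. split. lra. split. lra. split. apply U1_Dm; auto; split; lra.
    assert (y0 < 0) by (destruct (Rtotal_order y0 0) as [?|[?|?]]; [auto|contradiction|lra]). intros y Hy' Hd. rewrite (Rabs_left y0) in Hd by lra. apply Rabs_def2 in Hd. lra.
  - exists 0, 1. split. lra. split. lra. split. apply U1_Dp; auto; split; lra.
    intros y Hy' Hd. rewrite (Rabs_right y0) in Hd by lra. apply Rabs_def2 in Hd. lra.
Qed.

Section Fam3.
Variables (F G : R -> R -> R) (delta : R).
Hypothesis HF : C1_family F G delta.

Lemma chain_step (phi : R -> R) t0 phi' :
  Rabs t0 < delta -> derivable_pt_lim phi t0 phi' ->
  (forall t, Rabs t < delta -> -1 <= phi t <= 1) -> phi t0 <> 0 ->
  derivable_pt_lim (fun t => F t (phi t)) t0 (G t0 (phi t0) + Df (F t0) (phi t0) * phi').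
Proof.
  intros Ht0 Hphi HI Hn eps Heps.
  set (y0 := phi t0) in *.
  assert (HU := FU F G delta HF t0 Ht0).
  assert (HI0 : -1 <= y0 <= 1) by (apply HI; auto).
  destruct (lap_hderiv (F t0) y0 HU HI0 Hn) as [a [b [Hab [Hy0 [Hd Hlap]]]]].
  set (l := Df (F t0) y0) in *.
  set (K := Rabs phi' + 1). set (L := Rabs l + 1).
  assert (HK : K > 0) by (unfold K; pose proof (Rabs_pos phi'); lra).
  assert (HL : L > 0) by (unfold L; pose proof (Rabs_pos l); lra).
  set (e2 := Rmin 1 (eps / (4 * L))).
  assert (He2 : e2 > 0) by (unfold e2; apply Rmin_pos; [lra| apply Rdiv_lt_0_compat; lra]).
  assert (He2a : e2 <= 1) by apply Rmin_l.
  assert (He2b : e2 <= eps / (4 * L)) by apply Rmin_r.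
  destruct (Hphi e2 He2) as [[eta1 Heta1] K1]. simpl in K1.
  destruct (Fderiv F G delta HF t0 Ht0 (eps / 8) ltac:(lra)) as [eta2 [Heta2 K2]].
  destruct (B1_wcont _ (GB F G delta HF t0 Ht0) y0 HI0 (eps / 8) ltac:(lra)) as [dG [HdG KG]].
  set (e3 := eps / (4 * K)).
  assert (He3 : e3 > 0) by (unfold e3; apply Rdiv_lt_0_compat; lra).
  destruct (proj1 (hderiv_eps _ _ _ _ _) Hd e3 He3) as [dq [Hdq Kq]].
  assert (Hy0p : Rabs y0 > 0) by (apply Rabs_pos_lt; auto).
  set (eta3 := Rmin (Rmin dG dq) (Rabs y0) / K).
  assert (Hm3 : 0 < Rmin (Rmin dG dq) (Rabs y0)) by (apply Rmin_pos; [apply Rmin_pos|]; lra).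
  assert (Heta3 : eta3 > 0) by (unfold eta3; apply Rdiv_lt_0_compat; lra).
  set (eta4 := delta - Rabs t0).
  assert (Heta4 : eta4 > 0) by (unfold eta4; lra).
  assert (Hm : 0 < Rmin (Rmin eta1 eta2) (Rmin eta3 eta4)) by (apply Rmin_pos; apply Rmin_pos; lra).
  exists (mkposreal _ Hm). intros h Hh Hhlt. simpl in Hhlt.
  pose proof (Rmin_l (Rmin eta1 eta2) (Rmin eta3 eta4)). pose proof (Rmin_r (Rmin eta1 eta2) (Rmin eta3 eta4)).
  pose proof (Rmin_l eta1 eta2). pose proof (Rmin_r eta1 eta2).
  pose proof (Rmin_l eta3 eta4). pose proof (Rmin_r eta3 eta4).
  assert (Hth : Rabs (t0 + h) < delta).
  { eapply Rle_lt_trans. apply Rabs_triang. unfold eta4 in *; lra. }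
  specialize (K1 h Hh ltac:(lra)).
  change (phi t0) with y0 in K1.
  set (yh := phi (t0 + h)) in *.
  set (p := (yh - y0) / h) in *.
  assert (Hp : Rabs p <= K).
  { unfold K. replace p with ((p - phi') + phi') by ring. eapply Rle_trans. apply Rabs_triang. lra. }
  assert (Hyh : Rabs (yh - y0) <= K * Rabs h).
  { replace (yh - y0) with (p * h) by (unfold p; field; auto). rewrite Rabs_mult.
    apply Rmult_le_compat_r. apply Rabs_pos. lra. }
  assert (Hyh2 : Rabs (yh - y0) < Rmin (Rmin dG dq) (Rabs y0)).
  { eapply Rle_lt_trans. exact Hyh.
    apply Rlt_le_trans with (K * eta3). apply Rmult_lt_compat_l; lra.
    unfold eta3. right; field; lra. }
  pose proof (Rmin_l (Rmin dG dq) (Rabs y0)). pose proof (Rmin_r (Rmin dG dq) (Rabs y0)).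
  pose proof (Rmin_l dG dq). pose proof (Rmin_r dG dq).
  assert (HIh : -1 <= yh <= 1) by (apply HI; auto).
  destruct (K2 h Hh ltac:(lra) Hth) as [K2a _].
  specialize (K2a yh HIh).
  specialize (KG yh HIh ltac:(lra)).
  set (A := (F (t0 + h) yh - F t0 yh) / h).
  set (B := (F t0 yh - F t0 y0) / h).
  replace ((F (t0 + h) yh - F t0 y0) / h - (G t0 y0 + l * phi'))
    with ((A - G t0 yh) + (G t0 yh - G t0 y0) + (B - l * phi')) by (unfold A, B, yh, y0; field; auto).
  assert (HB : Rabs (B - l * phi') <= eps / 2).
  { destruct (Req_dec yh y0) as [E|NE].
    - unfold B. rewrite E. replace ((F t0 y0 - F t0 y0) / h - l * phi') with (l * (p - phi') - l * p)
        by (unfold p; rewrite E; field; auto).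
      unfold p. rewrite E. replace ((y0 - y0) / h) with 0 by (field; auto).
      rewrite Rmult_0_r, Rminus_0_r. unfold p in K1. rewrite E in K1.
      replace ((y0 - y0) / h - phi') with (0 - phi') in K1 by (field; auto).
      rewrite Rabs_mult.
      apply Rle_trans with (L * e2). apply Rmult_le_compat; try apply Rabs_pos. unfold L; lra. lra.
      apply Rle_trans with (L * (eps / (4 * L))). apply Rmult_le_compat_l; lra.
      replace (L * (eps / (4 * L))) with (eps / 4) by (field; lra). lra.
    - set (q := (F t0 yh - F t0 y0) / (yh - y0)).
      assert (Hq : Rabs (q - l) < e3).
      { apply Kq. apply Hlap; auto. lra. auto. lra. }
      assert (EB : B = q * p) by (unfold B, q, p; field; split; auto; lra).
      rewrite EB. replace (q * p - l * phi') with ((q - l) * p + l * (p - phi')) by ring.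
      eapply Rle_trans. apply Rabs_triang. rewrite !Rabs_mult.
      assert (Rabs (q - l) * Rabs p <= e3 * K) by (apply Rmult_le_compat; try apply Rabs_pos; lra).
      assert (Rabs l * Rabs (p - phi') <= L * e2) by (apply Rmult_le_compat; try apply Rabs_pos; unfold L; lra).
      assert (e3 * K = eps / 4) by (unfold e3; field; lra).
      assert (L * e2 <= eps / 4).
      { apply Rle_trans with (L * (eps / (4 * L))). apply Rmult_le_compat_l; lra. right; field; lra. }
      lra. }
  eapply Rle_lt_trans. apply Rabs_triang. 
  assert (Rabs (A - G t0 yh + (G t0 yh - G t0 y0)) <= eps / 8 + eps / 8).
  { eapply Rle_trans. apply Rabs_triang. unfold A. lra. }
  lra.
Qed.


Definition xo (k : nat) (t : R) : R := Nat.iter k (F t) 0.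

Lemma xo_I k t : Rabs t < delta -> -1 <= xo k t <= 1.
Proof. intros H. unfold xo. apply iter_I1. apply (FU F G delta HF); auto. lra. Qed.

Lemma deriv_F0 t0 : Rabs t0 < delta -> derivable_pt_lim (fun t => F t 0) t0 (G t0 0).
Proof.
  intros Ht0 eps Heps.
  destruct (Fderiv F G delta HF t0 Ht0 (eps / 2) ltac:(lra)) as [eta [Heta K]].
  assert (Hm : 0 < Rmin eta (delta - Rabs t0)) by (apply Rmin_pos; lra).
  exists (mkposreal _ Hm). intros h Hh Hlt. simpl in Hlt.
  pose proof (Rmin_l eta (delta - Rabs t0)). pose proof (Rmin_r eta (delta - Rabs t0)).
  assert (Hth : Rabs (t0 + h) < delta) by (eapply Rle_lt_trans; [apply Rabs_triang| lra]).
  destruct (K h Hh ltac:(lra) Hth) as [K1 _]. specialize (K1 0 ltac:(lra)). lra.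
Qed.

Lemma orbit_deriv n t0 : Rabs t0 < delta ->
  (forall j, (1 <= j <= n)%nat -> xo j t0 <> 0) ->
  derivable_pt_lim (xo (S n)) t0 (Dfn (F t0) n (F t0 0) * sumR (S n) (Jterm (F t0) (G t0))).
Proof.
  intros Ht0. induction n; intros Hz.
  - simpl. unfold Jterm. simpl.
    replace (1 * (0 + G t0 0 / 1)) with (G t0 0) by field.
    apply deriv_F0; auto.
  - assert (IH := IHn ltac:(intros; apply Hz; lia)).
    assert (Hn0 : xo (S n) t0 <> 0) by (apply Hz; lia).
    pose proof (chain_step (xo (S n)) t0 _ Ht0 IH (fun t Ht => xo_I (S n) t Ht) Hn0) as C.
    set (f := F t0) in *.
    assert (E : Nat.iter n f (f 0) = xo (S n) t0) by (unfold xo, f; rewrite Nat.iter_succ_r; auto).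
    assert (HD : Dfn f n (f 0) <> 0).
    { apply Dfn_neq0. apply (FU F G delta HF); auto. apply U1_range. apply (FU F G delta HF); auto. lra. }
    replace (Dfn f (S n) (f 0) * sumR (S (S n)) (Jterm f (G t0)))
      with (G t0 (xo (S n) t0) + Df f (xo (S n) t0) * (Dfn f n (f 0) * sumR (S n) (Jterm f (G t0)))).
    exact C.
    assert (EJ : Jterm f (G t0) (S n) = G t0 (xo (S n) t0) / (Dfn f n (f 0) * Df f (xo (S n) t0))).
    { unfold Jterm. change (Dfn f (S n) (f 0)) with (Dfn f n (f 0) * Df f (Nat.iter n f (f 0))). rewrite E. reflexivity. }
    change (sumR (S (S n)) (Jterm f (G t0))) with (sumR (S n) (Jterm f (G t0)) + Jterm f (G t0) (S n)).
    rewrite EJ.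
    change (Dfn f (S n) (f 0)) with (Dfn f n (f 0) * Df f (Nat.iter n f (f 0))). rewrite E.
    assert (Df f (xo (S n) t0) <> 0).
    { apply Df_neq0. apply (FU F G delta HF); auto. apply xo_I; auto. }
    field. split; auto.
Qed.

End Fam3.


Lemma sumR_sum_n g n : sumR (S n) g = sum_n g n.
Proof.
  induction n. simpl. rewrite sum_O. ring.
  change (sumR (S (S n)) g) with (sumR (S n) g + g (S n)). rewrite IHn, sum_Sn. reflexivity.
Qed.

Lemma tail_bound (g : nat -> R) V r : 0 <= r < 1 -> (forall i, Rabs (g i) <= V * r ^ i) ->
  forall N k, (N <= k)%nat -> Rabs (sumR k g - sumR N g) <= V * r ^ N / (1 - r).
Proof.
  intros Hr Hg N k Hk.
  assert (HV : 0 <= V) by (specialize (Hg 0%nat); simpl in Hg; pose proof (Rabs_pos (g 0%nat)); lra).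
  assert (H : forall k, (N <= k)%nat -> Rabs (sumR k g - sumR N g) <= V * (r ^ N - r ^ k) / (1 - r)).
  { induction k0; intros Hk0.
    - assert (N = 0%nat) by lia. subst. simpl. rewrite Rminus_eq_0, Rabs_R0. right; field; lra.
    - destruct (Nat.eq_dec N (S k0)) as [E|NE].
      + subst. rewrite Rminus_eq_0, Rabs_R0, Rminus_eq_0. right; field; lra.
      + specialize (IHk0 ltac:(lia)). simpl sumR.
        replace (sumR k0 g + g k0 - sumR N g) with ((sumR k0 g - sumR N g) + g k0) by ring.
        eapply Rle_trans. apply Rabs_triang.
        eapply Rle_trans. apply Rplus_le_compat. exact IHk0. apply Hg.
        right. simpl. field. lra. }
  eapply Rle_trans. apply H; auto.
  apply Rmult_le_compat_r. apply Rlt_le, Rinv_0_lt_compat; lra.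
  apply Rmult_le_compat_l; auto. pose proof (pow_le r k ltac:(lra)). lra.
Qed.

Lemma Dfn_lower f y lam n : 0 <= lam -> (forall k, lam <= Rabs (Df f (Nat.iter k f y))) ->
  lam ^ n <= Rabs (Dfn f n y).
Proof.
  intros Hl H. induction n; simpl. rewrite Rabs_R1; lra.
  rewrite Rabs_mult. rewrite Rmult_comm. apply Rmult_le_compat; auto. apply pow_le; auto.
Qed.

Lemma Lm_loc_eps f l : Lm (locally 0) f l -> forall e, e > 0 -> exists d, d > 0 /\
  forall t, Rabs t < d -> Rabs (f t - l) < e.
Proof.
  intros H e He. destruct (H e He) as [[d Hd] K]. exists d. split; auto.
  intros t Ht. apply K. apply ball_R. rewrite Rminus_0_r. exact Ht.
Qed.

Lemma Lm_loc_id : Lm (locally 0) (fun t => t) 0.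
Proof.
  intros e He. exists (mkposreal e He). intros y Hy. apply ball_R in Hy. exact Hy.
Qed.

Lemma notper_iter f : ~ periodic f -> forall j, (1 <= j)%nat -> Nat.iter j f 0 <> 0.
Proof. intros H j Hj E. apply H. exists j. auto. Qed.

Lemma inv_lt1 lam : lam > 1 -> 0 < / lam < 1.
Proof.
  intros H. split. apply Rinv_0_lt_compat; lra.
  apply (Rmult_lt_reg_l lam); [lra|]. rewrite Rinv_r; lra.
Qed.

Lemma lim_dist (s : nat -> R) (l : R) N B : is_lim_seq s l ->
  (forall k, (N <= k)%nat -> Rabs (s k - s N) <= B) -> Rabs (l - s N) <= B.
Proof.
  intros Hl Hb. apply le_eps_close. intros e He.
  apply is_lim_seq_spec in Hl. unfold is_lim_seq' in Hl. destruct (Hl (mkposreal e He)) as [M HM]. simpl in HM.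
  specialize (HM (max M N) ltac:(lia)). specialize (Hb (max M N) ltac:(lia)).
  replace (l - s N) with ((s (max M N) - s N) - (s (max M N) - l)) by ring.
  pose proof (Rabs_triang_inv (s (max M N) - s N) (s (max M N) - l)).
  assert (Rabs (l - s N) >= Rabs (s (max M N) - s N) - Rabs (s (max M N) - l) \/ True) by auto.
  replace (s (max M N) - s N - (s (max M N) - l)) with (l - s N) by ring.
  assert (Rabs (l - s N) <= Rabs (s (max M N) - s N) + Rabs (s (max M N) - l)).
  { replace (l - s N) with ((s (max M N) - s N) + - (s (max M N) - l)) by ring.
    eapply Rle_trans. apply Rabs_triang. rewrite Rabs_Ropp. lra. }
  lra.
Qed.

Section Fam4.
Variables (F G : R -> R -> R) (delta : R).
Hypothesis HF : C1_family F G delta.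

Lemma term_bound lam V tau : lam > 1 ->
  (forall t, Rabs t < tau -> forall z, -1 <= z <= 1 -> lam <= Rabs (Df (F t) z) /\ Rabs (G t z) <= V) ->
  tau <= delta ->
  forall t, Rabs t < tau -> forall i, Rabs (Jterm (F t) (G t) i) <= V * (/ lam) ^ i.
Proof.
  intros Hl HU Htd t Ht i. unfold Jterm.
  assert (HUt : U1 (F t)) by (apply (FU F G delta HF); lra).
  assert (HI : forall k, -1 <= Nat.iter k (F t) (F t 0) <= 1).
  { intros k. apply iter_I1; auto. apply U1_range; auto; lra. }
  assert (HD := Dfn_lower (F t) (F t 0) lam i ltac:(lra) (fun k => proj1 (HU t Ht _ (HI k)))).
  assert (Hp : lam ^ i > 0) by (apply pow_lt; lra).
  unfold Rdiv. rewrite Rabs_mult, Rabs_Rinv.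
  2: { intro E. rewrite E, Rabs_R0 in HD. lra. }
  rewrite pow_inv.
  apply Rmult_le_compat. apply Rabs_pos. apply Rlt_le, Rinv_0_lt_compat. 
  eapply Rlt_le_trans; eauto.
  apply HU; auto. apply iter_I1; auto. lra.
  apply Rinv_le_contravar; auto.
Qed.

Lemma J_nonper : ~ periodic (F 0) ->
  is_lim_seq (fun k => sumR k (Jterm (F 0) (G 0))) (J (F 0) (G 0)).
Proof.
  intros Hnp.
  destruct (unif F G delta HF) as [lam [V [tau [Hl [HV [Ht [Htd HU]]]]]]].
  assert (Hb := term_bound lam V tau Hl HU Htd 0 ltac:(rewrite Rabs_R0; lra)).
  assert (Hex : ex_series (Jterm (F 0) (G 0))).
  { apply (@ex_series_le R_AbsRing R_CompleteNormedModule _ (fun n => V * (/ lam) ^ n)).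
    intros n. apply Hb.
    apply (ex_series_scal_l V (fun n => (/ lam) ^ n)). apply ex_series_geom.
    pose proof (inv_lt1 lam Hl). rewrite Rabs_right; lra. }
  assert (EJ : J (F 0) (G 0) = Series (Jterm (F 0) (G 0))).
  { unfold J. destruct (excluded_middle_informative (periodic (F 0))); tauto. }
  rewrite EJ. apply is_lim_seq_incr_1.
  apply (is_lim_seq_ext (sum_n (Jterm (F 0) (G 0)))).
  intros n. rewrite sumR_sum_n. auto.
  apply Series_correct. exact Hex.
Qed.


Lemma partB : ~ periodic (F 0) -> J (F 0) (G 0) <> 0 ->
  forall eps, eps > 0 -> exists t, 0 < t < eps /\ Rabs t < delta /\ periodic (F t).
Proof.
  intros Hnp HJ eps Heps.
  destruct (unif F G delta HF) as [lam [V [tau1 [Hl [HV [Ht1 [Ht1d HU]]]]]]].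
  set (r := / lam). pose proof (inv_lt1 lam Hl) as Hr. fold r in Hr.
  set (Jv := J (F 0) (G 0)) in *.
  assert (HJp : Rabs Jv > 0) by (apply Rabs_pos_lt; auto).
  assert (Hlim := J_nonper Hnp). fold Jv in Hlim.
  assert (Hb := term_bound lam V tau1 Hl HU Ht1d).
  assert (Hr1 : 1 - r > 0) by lra.
  destruct (pow_lt_1_zero r ltac:(rewrite Rabs_right; lra) (Rabs Jv / 8 * (1 - r) / V)) as [N HN].
  { apply Rdiv_lt_0_compat; [apply Rmult_lt_0_compat|]; lra. }
  specialize (HN N (le_n N)). rewrite Rabs_right in HN by (apply Rle_ge, pow_le; lra).
  assert (Hbnd : V * r ^ N / (1 - r) < Rabs Jv / 8).
  { replace (V * r ^ N / (1 - r)) with (V / (1 - r) * r ^ N) by (field; lra).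
    apply Rlt_le_trans with (V / (1 - r) * (Rabs Jv / 8 * (1 - r) / V)).
    apply Rmult_lt_compat_l; auto. apply Rdiv_lt_0_compat; lra.
    right; field; lra. }
  assert (H0 : Rabs 0 < tau1) by (rewrite Rabs_R0; lra).
  assert (HJN : Rabs (Jv - sumR N (Jterm (F 0) (G 0))) <= V * r ^ N / (1 - r)).
  { apply (lim_dist (fun k => sumR k (Jterm (F 0) (G 0)))); auto.
    intros k Hk. apply tail_bound; auto. lra. }
  assert (HC : Lm (locally 0) (fun t => BS (F t) (G t) N 0) (BS (F 0) (G 0) N 0)).
  { apply (LBS F G delta HF (fun t => t) Lm_loc_id (fun _ => 0)).
    apply Lm_const. apply filter_forall; intros; lra. lra.
    intros j Hj. rewrite <- Nat.iter_succ_r. apply notper_iter; auto. lia. }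
  destruct (Lm_loc_eps _ _ HC (Rabs Jv / 8) ltac:(lra)) as [d2 [Hd2 K2]].
  assert (HS : forall t k, Rabs t < Rmin tau1 d2 -> (N <= k)%nat ->
             Rabs Jv / 2 < Rabs (sumR k (Jterm (F t) (G t)))).
  { intros t k Ht Hk. pose proof (Rmin_l tau1 d2). pose proof (Rmin_r tau1 d2).
    specialize (K2 t ltac:(lra)). unfold BS in K2.
    change (sumR N (fun i => G t (Nat.iter i (F t) 0) / Dfn (F t) i (F t 0))) with (sumR N (Jterm (F t) (G t))) in K2.
    change (sumR N (fun i => G 0 (Nat.iter i (F 0) 0) / Dfn (F 0) i (F 0 0))) with (sumR N (Jterm (F 0) (G 0))) in K2.
    assert (T := tail_bound _ V r ltac:(lra) (Hb t ltac:(lra)) N k Hk).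
    set (a := sumR k (Jterm (F t) (G t))) in *. set (b := sumR N (Jterm (F t) (G t))) in *.
    set (c := sumR N (Jterm (F 0) (G 0))) in *.
    assert (Rabs Jv <= Rabs a + Rabs (a - b) + Rabs (b - c) + Rabs (Jv - c)).
    { replace Jv with (a - (a - b) - (b - c) + (Jv - c)) at 1 by ring.
      eapply Rle_trans. apply Rabs_triang. 
      assert (Rabs (a - (a - b) - (b - c)) <= Rabs a + Rabs (a - b) + Rabs (b - c)).
      { unfold Rminus at 1 2. eapply Rle_trans. apply Rabs_triang. rewrite Rabs_Ropp.
        eapply Rle_trans. apply Rplus_le_compat_r. apply Rabs_triang. rewrite Rabs_Ropp. lra. }
      lra. }
    lra. }
  apply NNPP. intro Hno.
  set (e := Rmin eps (Rmin tau1 d2) / 2).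
  assert (Hm : 0 < Rmin eps (Rmin tau1 d2)) by (apply Rmin_pos; [lra| apply Rmin_pos; lra]).
  pose proof (Rmin_l eps (Rmin tau1 d2)). pose proof (Rmin_r eps (Rmin tau1 d2)).
  assert (He : 0 < e) by (unfold e; lra).
  assert (Hnz : forall t, e / 2 <= t <= e -> forall j, (1 <= j)%nat -> xo F j t <> 0).
  { intros t Ht j Hj E. apply Hno. exists t. pose proof (Rmin_l tau1 d2).
    split. split; unfold e in *; lra. split.
    rewrite Rabs_right by lra. unfold e in *; lra. exists j. split; auto. }
  destruct (pow_lt_1_zero r ltac:(rewrite Rabs_right; lra) (Rabs Jv / 2 * (e / 2) / 2)) as [n0 Hn0].
  { apply Rdiv_lt_0_compat; [apply Rmult_lt_0_compat|]; lra. }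
  set (n := max n0 N).
  specialize (Hn0 n ltac:(unfold n; lia)). rewrite Rabs_right in Hn0 by (apply Rle_ge, pow_le; lra).
  set (fp := fun c => Dfn (F c) n (F c 0) * sumR (S n) (Jterm (F c) (G c))).
  destruct (MVT_cor2 (xo F (S n)) fp (e / 2) e ltac:(lra)) as [c [Hc Hc']].
  { intros c Hc. pose proof (Rmin_l tau1 d2). apply (orbit_deriv F G delta HF). rewrite Rabs_right by lra. unfold e in *; lra.
    intros j Hj. apply Hnz; [split; lra | lia]. }
  assert (Hca : Rabs c < Rmin tau1 d2) by (rewrite Rabs_right by lra; unfold e in *; lra).
  assert (Hcd : Rabs c < delta) by (pose proof (Rmin_l tau1 d2); lra).
  assert (HSc := HS c (S n) Hca ltac:(unfold n; lia)).
  assert (HDc : lam ^ n <= Rabs (Dfn (F c) n (F c 0))).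
  { apply Dfn_lower. lra. intros k. apply HU. pose proof (Rmin_l tau1 d2); lra.
    apply iter_I1. apply (FU F G delta HF); auto. apply U1_range. apply (FU F G delta HF); auto. lra. }
  pose proof (Rmin_l tau1 d2).
  assert (Hx1 := xo_I F G delta HF (S n) e ltac:(rewrite Rabs_right by lra; unfold e in *; lra)).
  assert (Hx2 := xo_I F G delta HF (S n) (e/2) ltac:(rewrite Rabs_right by lra; unfold e in *; lra)).
  assert (Hbig : Rabs (fp c * (e - e / 2)) > 2).
  { unfold fp. rewrite !Rabs_mult. rewrite (Rabs_right (e - e/2)) by lra.
    assert (Hlp : lam ^ n = / r ^ n) by (unfold r; rewrite pow_inv, Rinv_inv; auto).
    assert (Hrn : r ^ n > 0) by (apply pow_lt; lra).
    assert (lam ^ n * (Rabs Jv / 2) * (e / 2) > 2).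
    { rewrite Hlp. apply (Rmult_lt_reg_l (r ^ n)); auto.
      replace (r ^ n * (/ r ^ n * (Rabs Jv / 2) * (e / 2))) with (Rabs Jv / 2 * (e / 2)) by (field; lra).
      apply (Rmult_lt_reg_r (/ 2)). lra. 
      replace (Rabs Jv / 2 * (e / 2) * / 2) with (Rabs Jv / 2 * (e / 2) / 2) by field.
      nra. }
    assert (Hlpos : lam ^ n > 0) by (apply pow_lt; lra).
    apply Rlt_le_trans with (lam ^ n * (Rabs Jv / 2) * (e / 2)). lra.
    replace (e - e / 2) with (e / 2) by field.
    apply Rmult_le_compat_r. lra. apply Rmult_le_compat; lra. }
  rewrite <- Hc in Hbig.
  assert (Rabs (xo F (S n) e - xo F (S n) (e / 2)) <= 2).
  { apply Rabs_le. lra. }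
  lra.
Qed.

End Fam4.


Lemma least_exists (Q : nat -> Prop) : (exists n, Q n) -> exists n, Q n /\ forall m, (m < n)%nat -> ~ Q m.
Proof.
  intros [n Hn]. revert Hn. induction n as [n IH] using (well_founded_induction Wf_nat.lt_wf).
  intros Hn. destruct (classic (exists m, (m < n)%nat /\ Q m)) as [[m [Hm Qm]]|Hno].
  - apply (IH m Hm Qm).
  - exists n. split; auto. intros m Hm Qm. apply Hno. eauto.
Qed.

Lemma tail_bound2 (g : nat -> R) A q N : 0 <= q < 1 -> 0 <= A ->
  (forall i, (N <= i)%nat -> Rabs (g i) <= A * q ^ (i - N)) ->
  forall k, (N <= k)%nat -> Rabs (sumR k g - sumR N g) <= A / (1 - q).
Proof.
  intros Hq HA Hg.
  assert (H : forall k, (N <= k)%nat -> Rabs (sumR k g - sumR N g) <= A * (1 - q ^ (k - N)) / (1 - q)).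
  { induction k; intros Hk.
    - assert (N = 0%nat) by lia. subst. simpl. rewrite Rminus_eq_0, Rabs_R0. right; field; lra.
    - destruct (Nat.eq_dec N (S k)) as [E|NE].
      + subst. rewrite Rminus_eq_0, Rabs_R0, Nat.sub_diag. simpl. right; field; lra.
      + specialize (IHk ltac:(lia)). simpl sumR.
        replace (sumR k g + g k - sumR N g) with ((sumR k g - sumR N g) + g k) by ring.
        eapply Rle_trans. apply Rabs_triang.
        eapply Rle_trans. apply Rplus_le_compat. exact IHk. apply Hg; lia.
        replace (S k - N)%nat with (S (k - N)) by lia. right. simpl. field. lra. }
  intros k Hk. eapply Rle_trans. apply H; auto.
  apply Rmult_le_compat_r. apply Rlt_le, Rinv_0_lt_compat; lra.
  pose proof (pow_le q (k - N) ltac:(lra)). nra.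
Qed.

Lemma Dfn_add f a n w : Dfn f (a + n) w = Dfn f a w * Dfn f n (Nat.iter a f w).
Proof.
  induction n.
  - rewrite Nat.add_0_r. simpl. ring.
  - rewrite Nat.add_succ_r. simpl. rewrite IHn. rewrite <- Nat.iter_add.
    replace (n + a)%nat with (a + n)%nat by lia. ring.
Qed.

Lemma sum_split f v a n : Dfn f a (f 0) <> 0 ->
  (forall i, (i < n)%nat -> Dfn f i (f (Nat.iter a f 0)) <> 0) ->
  sumR (a + n) (Jterm f v) = sumR a (Jterm f v) + BS f v n (Nat.iter a f 0) / Dfn f a (f 0).
Proof.
  intros Ha Hi. induction n.
  - rewrite Nat.add_0_r. unfold BS. simpl. field; auto.
  - rewrite Nat.add_succ_r. simpl sumR. rewrite IHn by (intros; apply Hi; lia).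
    unfold BS. simpl sumR. unfold Jterm.
    rewrite Dfn_add. rewrite Nat.iter_swap. rewrite Nat.add_comm, Nat.iter_add.
    assert (Dfn f n (f (Nat.iter a f 0)) <> 0) by (apply Hi; lia).
    field. split; auto.
Qed.

Lemma prime_period_unique f p q : prime_period f p -> prime_period f q -> p = q.
Proof.
  intros [Hp1 [Hp2 Hp3]] [Hq1 [Hq2 Hq3]].
  destruct (Nat.lt_trichotomy p q) as [H|[H|H]]; auto.
  - exfalso. apply (Hq3 p); auto.
  - exfalso. apply (Hp3 q); auto.
Qed.

(* abstract shadowing combinatorics *)
Lemma AL (y E g Bf : nat -> R) (p r M0 : nat) (dl ka eta Jv W : R) :
  (1 <= p)%nat -> (1 <= r)%nat -> y 0%nat = 0 -> E 0%nat = 1 -> dl > 0 -> ka > 2 -> 0 <= W -> 0 <= eta ->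
  (forall m, Rabs (y (m * p)%nat) < dl -> (m * p < r)%nat ->
     ((m + 1) * p <= r)%nat /\
     sumR ((m + 1) * p) g - sumR (m * p) g = Bf m / E (m * p)%nat /\
     Rabs (Bf m - Jv) <= eta /\
     (Rabs (y ((m + 1) * p)%nat) < dl -> Rabs (E ((m + 1) * p)%nat) >= ka * Rabs (E (m * p)%nat)) /\
     Rabs (E ((m + 1) * p)%nat) >= Rabs (E (m * p)%nat)) ->
  (forall N, (N <= r)%nat -> Rabs (sumR r g - sumR N g) <= W / Rabs (E N)) ->
  (forall i, E i <> 0) ->
  (forall m, (m <= M0)%nat -> Rabs (y (m * p)%nat) < dl) ->
  (Rabs Jv - eta) - (Rabs Jv + eta) / (ka - 1) - W / ka ^ M0 > 0 ->
  sumR r g <> 0.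
Proof.
  intros Hp Hr Hy0 HE0 Hdl Hka HW Heta Hblk Htail HEnz HM0 Hnum.
  set (q := / ka).
  assert (Hq : 0 < q < 1 / 2).
  { unfold q. split. apply Rinv_0_lt_compat; lra.
    apply (Rmult_lt_reg_l ka); [lra|]. rewrite Rinv_r by lra. lra. }
  set (Good := fun m => Rabs (y (m * p)%nat) < dl /\ (m * p < r)%nat).
  destruct (least_exists (fun m => ~ Good m)) as [M [HM HMl]].
  { exists r. unfold Good. intros [_ H]. nia. }
  assert (HG : forall m, (m < M)%nat -> Good m) by (intros m Hm; apply NNPP; apply HMl; auto).
  assert (HM1 : (1 <= M)%nat).
  { destruct M. exfalso. apply HM. unfold Good. simpl. rewrite Hy0, Rabs_R0. split; [lra| lia]. lia. }
  set (c := (Rabs Jv + eta)).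
  assert (Inv : forall k, (k < M)%nat ->
     ((k + 1) * p <= r)%nat /\ Rabs (E (k * p)%nat) >= ka ^ k /\ Rabs (E ((k + 1) * p)%nat) >= ka ^ k /\
     Rabs (sumR ((k + 1) * p) g - Bf 0%nat) <= c * q * (1 - q ^ k) / (1 - q)).
  { induction k; intros Hk.
    - destruct (HG 0%nat Hk) as [G1 G2]. destruct (Hblk 0%nat G1 G2) as [B1 [B2 [B3 [B4 B5]]]].
      simpl in *. rewrite HE0 in *. rewrite Rabs_R1 in *. split; auto. split. lra. split. lra.
      replace (sumR (p + 0) g) with (sumR (p + 0) g - 0) by ring.
      rewrite B2. rewrite Rdiv_1_r, Rminus_eq_0, Rabs_R0. right; field; lra.
    - destruct IHk as [I1 [I2 [I3 I4]]]. lia.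
      destruct (HG k ltac:(lia)) as [G1 G2]. destruct (Hblk k G1 G2) as [B1 [B2 [B3 [B4 B5]]]].
      destruct (HG (S k) Hk) as [G1' G2'].
      destruct (Hblk (S k) G1' G2') as [C1 [C2 [C3 [C4 C5]]]].
      assert (Ek : (S k * p = (k + 1) * p)%nat) by lia.
      rewrite Ek in G1', G2', C2, C4, C5.
      assert (HEk : Rabs (E ((k + 1) * p)%nat) >= ka ^ S k).
      { specialize (B4 G1'). simpl. nra. }
      rewrite Ek. split; [exact C1|]. split; [exact HEk|]. split; [lra|].
      replace (sumR ((S k + 1) * p) g - Bf 0%nat) with
        ((sumR ((k + 1) * p) g - Bf 0%nat) + (sumR ((S k + 1) * p) g - sumR ((k + 1) * p) g)) by ring.
      rewrite C2. eapply Rle_trans. apply Rabs_triang.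
      assert (Hkp : ka ^ S k > 0) by (apply pow_lt; lra).
      assert (Hbf : Rabs (Bf (S k)) <= c).
      { unfold c. replace (Bf (S k)) with ((Bf (S k) - Jv) + Jv) by ring.
        eapply Rle_trans. apply Rabs_triang. lra. }
      assert (Rabs (Bf (S k) / E ((k + 1) * p)%nat) <= c * q ^ S k).
      { unfold Rdiv. rewrite Rabs_mult, Rabs_Rinv by auto.
        unfold q. rewrite pow_inv. apply Rmult_le_compat; auto. apply Rabs_pos.
        apply Rlt_le, Rinv_0_lt_compat. pose proof (HEnz ((k + 1) * p)%nat).
        apply Rabs_pos_lt; auto. apply Rinv_le_contravar; lra. }
      assert (c * q * (1 - q ^ k) / (1 - q) + c * q ^ S k = c * q * (1 - q ^ S k) / (1 - q)).
      { simpl. field. lra. }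
      lra. }
  destruct (Inv (M - 1)%nat ltac:(lia)) as [I1 [I2 [I3 I4]]].
  replace (M - 1 + 1)%nat with M in I1, I3, I4 by lia.
  assert (HB0 : Rabs (Bf 0%nat) >= Rabs Jv - eta).
  { destruct (HG 0%nat ltac:(lia)) as [G1 G2]. destruct (Hblk 0%nat G1 G2) as [_ [_ [B3 _]]].
    assert (Rabs Jv <= Rabs (Bf 0%nat) + Rabs (Bf 0%nat - Jv)).
    { replace Jv with (Bf 0%nat - (Bf 0%nat - Jv)) at 1 by ring.
      unfold Rminus at 1. eapply Rle_trans. apply Rabs_triang. rewrite Rabs_Ropp. lra. }
    lra. }
  assert (Hgeo : c * q * (1 - q ^ (M - 1)) / (1 - q) <= c / (ka - 1)).
  { assert (Hc : c >= 0) by (unfold c; pose proof (Rabs_pos Jv); lra).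
    assert (q ^ (M - 1) >= 0) by (apply Rle_ge, pow_le; lra).
    apply Rle_trans with (c * q / (1 - q)).
    unfold Rdiv. rewrite !Rmult_assoc. apply Rmult_le_compat_l. lra.
    apply Rmult_le_compat_l. lra. rewrite <- (Rmult_1_l (/ (1 - q))) at 2.
    apply Rmult_le_compat_r. apply Rlt_le, Rinv_0_lt_compat; lra. lra.
    right. unfold q. field. lra. }
  assert (HS : Rabs (sumR (M * p) g) >= (Rabs Jv - eta) - c / (ka - 1)).
  { assert (Rabs (Bf 0%nat) <= Rabs (sumR (M * p) g) + Rabs (sumR (M * p) g - Bf 0%nat)).
    { replace (Bf 0%nat) with (sumR (M * p) g - (sumR (M * p) g - Bf 0%nat)) at 1 by ring.
      unfold Rminus at 1. eapply Rle_trans. apply Rabs_triang. rewrite Rabs_Ropp. lra. }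
    lra. }
  assert (HT : Rabs (sumR r g - sumR (M * p) g) <= W / ka ^ M0).
  { destruct (Nat.eq_dec (M * p) r) as [EE|NE].
    - rewrite EE, Rminus_eq_0, Rabs_R0. apply Rdiv_le_0_compat; auto. apply pow_lt; lra.
    - assert (Hyb : ~ Rabs (y (M * p)%nat) < dl).
      { intro H. apply HM. split; auto. lia. }
      assert (HMM : (M0 < M)%nat).
      { destruct (Nat.lt_ge_cases M0 M); auto. exfalso. apply Hyb. apply HM0. lia. }
      eapply Rle_trans. apply Htail. lia.
      unfold Rdiv. apply Rmult_le_compat_l; auto.
      apply Rinv_le_contravar. apply pow_lt; lra.
      apply Rge_le. eapply Rge_trans. exact I3.
      apply Rle_ge. apply Rle_pow. lra. lia. }
  intro Z.
  assert (Rabs (sumR (M * p) g) <= Rabs (sumR r g) + Rabs (sumR r g - sumR (M * p) g)).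
  { replace (sumR (M * p) g) with (sumR r g - (sumR r g - sumR (M * p) g)) at 1 by ring.
    unfold Rminus at 1. eapply Rle_trans. apply Rabs_triang. rewrite Rabs_Ropp. lra. }
  rewrite Z in *. rewrite Rabs_R0 in H. unfold c in *. lra.
Qed.


Definition Fi2 : (R * R -> Prop) -> Prop := filter_prod (locally (0:R)) (locally (0:R)).

Instance Fi2_filter : Filter Fi2.
Proof. unfold Fi2. apply filter_prod_filter; apply locally_filter. Qed.

Lemma prod_eps P : Fi2 P -> exists d, d > 0 /\ forall t y, Rabs t < d -> Rabs y < d -> P (t, y).
Proof.
  intros [Q R [[d1 Hd1] K1] [[d2 Hd2] K2] K].
  exists (Rmin d1 d2). split. apply Rmin_pos; assumption.
  intros t y Ht Hy. apply K.
  apply K1. apply ball_R. rewrite Rminus_0_r. pose proof (Rmin_l d1 d2). simpl in *. lra.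
  apply K2. apply ball_R. rewrite Rminus_0_r. pose proof (Rmin_r d1 d2). simpl in *. lra.
Qed.

Lemma Lm_fst : Lm Fi2 fst 0.
Proof.
  intros e He. exists (fun t => Rabs (t - 0) < e) (fun _ => True).
  exists (mkposreal e He). intros y Hy. apply ball_R in Hy. exact Hy.
  apply filter_true. intros x y Hx _. exact Hx.
Qed.

Lemma Lm_snd : Lm Fi2 snd 0.
Proof.
  intros e He. exists (fun _ => True) (fun t => Rabs (t - 0) < e).
  apply filter_true.
  exists (mkposreal e He). intros y Hy. apply ball_R in Hy. exact Hy.
  intros x y _ Hy. exact Hy.
Qed.

Lemma filter_forall_lt {T} {Fi : (T -> Prop) -> Prop} {FF : Filter Fi} (P : nat -> T -> Prop) n :
  (forall j, (j < n)%nat -> Fi (P j)) -> Fi (fun x => forall j, (j < n)%nat -> P j x).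
Proof.
  induction n; intros H.
  - apply filter_forall. intros x j Hj. lia.
  - eapply filter_imp. 2: apply filter_and; [apply IHn; intros; apply H; lia| apply (H n); lia].
    intros x [H1 H2] j Hj. destruct (Nat.eq_dec j n). subst; auto. apply H1; lia.
Qed.

Lemma iter_mul_p f p m : Nat.iter p f 0 = 0 -> Nat.iter (m * p) f 0 = 0.
Proof.
  intros H. induction m. reflexivity.
  replace (S m * p)%nat with (p + m * p)%nat by lia. rewrite Nat.iter_add, IHm. auto.
Qed.

Section Fam6.
Variables (F G : R -> R -> R) (delta : R).
Hypothesis HF : C1_family F G delta.

Lemma Df_unif mu' : mu' < Rmin (Rabs (Dp (F 0) 0)) (Rabs (Dm (F 0) 0)) ->
  exists dc tc, dc > 0 /\ tc > 0 /\ forall t z, Rabs t < tc -> Rabs z < dc -> -1 <= z <= 1 ->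
     mu' <= Rabs (Df (F t) z).
Proof.
  intros Hmu. 
  pose proof (Rmin_l (Rabs (Dp (F 0) 0)) (Rabs (Dm (F 0) 0))). pose proof (Rmin_r (Rabs (Dp (F 0) 0)) (Rabs (Dm (F 0) 0))).
  set (mu := Rmin (Rabs (Dp (F 0) 0)) (Rabs (Dm (F 0) 0))) in *.
  set (e := mu - mu').
  destruct (near0 F G delta HF (e / 2) ltac:(unfold e; lra)) as [tau [Htau [_ K]]].
  pose proof (F0U F G delta HF) as [[_ [C1 [C2 _]]] _].
  destruct (C1_wcont _ _ _ C1 0 ltac:(lra) (e / 2) ltac:(unfold e; lra)) as [d1 [Hd1 K1]].
  destruct (C1_wcont _ _ _ C2 0 ltac:(lra) (e / 2) ltac:(unfold e; lra)) as [d2 [Hd2 K2]].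
  exists (Rmin d1 d2), tau. split. apply Rmin_pos; lra. split; auto.
  intros t z Ht Hz HI. pose proof (Rmin_l d1 d2). pose proof (Rmin_r d1 d2).
  destruct (K t Ht) as [_ [Km Kp]]. unfold Df. destruct (Rle_dec z 0).
  - specialize (Km z ltac:(lra)). specialize (K1 z ltac:(lra) ltac:(rewrite Rminus_0_r; lra)).
    fold (Dm (F 0) z) in K1. fold (Dm (F 0) 0) in K1.
    assert (Rabs (Dm (F 0) 0) <= Rabs (Dm (F t) z) + Rabs (Dm (F t) z - Dm (F 0) z) + Rabs (Dm (F 0) z - Dm (F 0) 0)).
    { replace (Dm (F 0) 0) with (Dm (F t) z - (Dm (F t) z - Dm (F 0) z) - (Dm (F 0) z - Dm (F 0) 0)) at 1 by ring.
      unfold Rminus at 1 2. eapply Rle_trans. apply Rabs_triang. rewrite Rabs_Ropp.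
      eapply Rle_trans. apply Rplus_le_compat_r. apply Rabs_triang. rewrite Rabs_Ropp. lra. }
    unfold e in *. lra.
  - specialize (Kp z ltac:(lra)). specialize (K2 z ltac:(lra) ltac:(rewrite Rminus_0_r; lra)).
    fold (Dp (F 0) z) in K2. fold (Dp (F 0) 0) in K2.
    assert (Rabs (Dp (F 0) 0) <= Rabs (Dp (F t) z) + Rabs (Dp (F t) z - Dp (F 0) z) + Rabs (Dp (F 0) z - Dp (F 0) 0)).
    { replace (Dp (F 0) 0) with (Dp (F t) z - (Dp (F t) z - Dp (F 0) z) - (Dp (F 0) z - Dp (F 0) 0)) at 1 by ring.
      unfold Rminus at 1 2. eapply Rle_trans. apply Rabs_triang. rewrite Rabs_Ropp.
      eapply Rle_trans. apply Rplus_le_compat_r. apply Rabs_triang. rewrite Rabs_Ropp. lra. }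
    unfold e in *. lra.
Qed.

Lemma orbit_small p M0 dl : dl > 0 -> Nat.iter p (F 0) 0 = 0 ->
  exists tau, tau > 0 /\ forall t, Rabs t < tau -> forall m, (m <= M0)%nat -> Rabs (xo F (m * p) t) < dl.
Proof.
  intros Hdl Hp. induction M0.
  - exists 1. split. lra. intros t Ht m Hm. assert (m = 0%nat) by lia. subst. simpl. unfold xo. simpl. rewrite Rabs_R0. lra.
  - destruct IHM0 as [tau [Htau K]].
    assert (HI0 : locally 0 (fun x : R => -1 <= (fun _ : R => 0) x <= 1)).
    { apply filter_forall. intros; simpl; lra. }
    destruct (Liter F G delta HF (fun t => t) Lm_loc_id (fun _ => 0) 0 (S M0 * p) (Lm_const 0)
       HI0 ltac:(split; lra)) as [L _].
    rewrite iter_mul_p in L; auto.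
    destruct (Lm_loc_eps _ _ L dl Hdl) as [d [Hd Kd]].
    exists (Rmin tau d). split. apply Rmin_pos; lra.
    intros t Ht m Hm. pose proof (Rmin_l tau d). pose proof (Rmin_r tau d).
    destruct (Nat.eq_dec m (S M0)). subst. specialize (Kd t ltac:(lra)). rewrite Rminus_0_r in Kd. exact Kd.
    apply K. lra. lia.
Qed.


Lemma Lm_abs_gt {T} {Fi : (T -> Prop) -> Prop} {FF : Filter Fi} f l c :
  Lm Fi f l -> c < Rabs l -> Fi (fun x => c < Rabs (f x)).
Proof.
  intros H Hc. eapply filter_imp. 2: apply (H (Rabs l - c) ltac:(lra)).
  intros x E. assert (Rabs l <= Rabs (f x) + Rabs (f x - l)).
  { replace l with (f x - (f x - l)) at 1 by ring. unfold Rminus at 1.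
    eapply Rle_trans. apply Rabs_triang. rewrite Rabs_Ropp. lra. }
  lra.
Qed.

Lemma block_unif p eta' Lam' : prime_period (F 0) p -> eta' > 0 ->
  Lam' < Rabs (Dfn (F 0) (p - 1) (F 0 0)) ->
  exists d, d > 0 /\ forall t y, Rabs t < d -> Rabs y < d ->
   (forall j, (1 <= j < p)%nat -> Nat.iter j (F t) y <> 0) /\
   Rabs (BS (F t) (G t) p y - sumR p (Jterm (F 0) (G 0))) < eta' /\
   Lam' < Rabs (Dfn (F t) (p - 1) (F t y)).
Proof.
  intros [Hp1 [Hp2 Hp3]] Heta HL.
  assert (Hs : Fi2 (fun x => -1 <= snd x <= 1)).
  { eapply filter_imp. 2: apply (Lm_snd 1 ltac:(lra)). intros x E. simpl in E. rewrite Rminus_0_r in E.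
    apply Rabs_def2 in E. destruct E. split; left; assumption. }
  assert (HU0 := F0U F G delta HF).
  assert (Ha : Fi2 (fun x => forall j, (j < p)%nat -> (1 <= j)%nat -> Nat.iter j (F (fst x)) (snd x) <> 0)).
  { apply (filter_forall_lt (fun j x => (1 <= j)%nat -> Nat.iter j (F (fst x)) (snd x) <> 0)).
    intros j Hj. destruct j. apply filter_forall. intros; lia.
    destruct (Liter F G delta HF fst Lm_fst snd 0 (S j) Lm_snd Hs ltac:(split; lra)) as [L _].
    assert (Hnz : Nat.iter (S j) (F 0) 0 <> 0) by (apply Hp3; lia).
    eapply filter_imp. 2: apply (Lm_away _ _ L Hnz). intros x E _ Z. cbv beta in E. rewrite Z, Rabs_R0 in E.
    pose proof (Rabs_pos_lt _ Hnz). lra. }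
  assert (Hb : Fi2 (fun x => Rabs (BS (F (fst x)) (G (fst x)) p (snd x) - sumR p (Jterm (F 0) (G 0))) < eta')).
  { assert (L := LBS F G delta HF fst Lm_fst snd 0 p Lm_snd Hs ltac:(split; lra)
       ltac:(intros j Hj; rewrite <- Nat.iter_succ_r; apply Hp3; lia)).
    apply (L eta' Heta). }
  assert (HF0 : -1 <= F 0 0 <= 1) by (apply U1_range; auto; lra).
  assert (HIF : Fi2 (fun x => -1 <= F (fst x) (snd x) <= 1)).
  { eapply filter_imp. 2: apply filter_and; [exact Hs| exact (ev_delta F G delta HF fst Lm_fst)].
    intros x [E1 E2]. apply U1_range; auto. apply (FU F G delta HF); auto. }
  assert (Hc : Fi2 (fun x => Lam' < Rabs (Dfn (F (fst x)) (p - 1) (F (fst x) (snd x))))).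
  { assert (L := LDfn F G delta HF fst Lm_fst (fun x => F (fst x) (snd x)) (F 0 0) (p - 1)
       (LF F G delta HF fst Lm_fst snd 0 Lm_snd Hs ltac:(split; lra)) HIF HF0
       ltac:(intros j Hj; rewrite <- Nat.iter_succ_r; apply Hp3; lia)).
    apply (Lm_abs_gt _ _ _ L HL). }
  destruct (prod_eps _ (filter_and _ _ Ha (filter_and _ _ Hb Hc))) as [d [Hd K]].
  exists d. split; auto. intros t y Ht Hy. destruct (K t y Ht Hy) as [K1 [K2 K3]]. simpl in *.
  split; [| split]; auto. intros j [Hj1 Hj2]. apply K1; auto.
Qed.

End Fam6.


Section Fam7.
Variables (F G : R -> R -> R) (delta : R).
Hypothesis HF : C1_family F G delta.

Lemma Dfn_succ f n w : Dfn f (S n) w = Dfn f n w * Df f (Nat.iter n f w).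
Proof. reflexivity. Qed.

Lemma SH p : prime_period (F 0) p -> (2 <= p)%nat ->
  Rabs (Dfn (F 0) (p - 1) (F 0 0)) * Rmin (Rabs (Dp (F 0) 0)) (Rabs (Dm (F 0) 0)) > 2 ->
  sumR p (Jterm (F 0) (G 0)) <> 0 ->
  exists tau, tau > 0 /\ tau <= delta /\ forall t r, Rabs t < tau -> prime_period (F t) r ->
    sumR r (Jterm (F t) (G t)) <> 0.
Proof.
  intros Hpp Hp2 Hgood HJ.
  set (Jv := sumR p (Jterm (F 0) (G 0))) in *.
  set (Lam := Rabs (Dfn (F 0) (p - 1) (F 0 0))) in *.
  set (mu := Rmin (Rabs (Dp (F 0) 0)) (Rabs (Dm (F 0) 0))) in *.
  assert (HLam0 : Lam >= 0) by (unfold Lam; apply Rle_ge, Rabs_pos).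
  assert (Hmu0 : mu >= 0) by (unfold mu; apply Rle_ge, Rmin_glb; apply Rabs_pos).
  assert (HLam : Lam > 0) by nra. assert (Hmu : mu > 0) by nra.
  set (ka := (2 + Lam * mu) / 2).
  assert (Hka : ka > 2) by (unfold ka; lra).
  set (rho := ka / (Lam * mu)).
  assert (Hrho : 0 < rho < 1).
  { unfold rho. split. apply Rdiv_lt_0_compat; nra.
    apply (Rmult_lt_reg_r (Lam * mu)). nra. unfold Rdiv. rewrite Rmult_assoc, Rinv_l by nra. unfold ka. lra. }
  set (th := (1 + rho) / 2).
  assert (Hth : rho <= th * th /\ th < 1 /\ th > 0) by (unfold th; split; [nra| lra]).
  set (Lam' := Lam * th). set (mu' := mu * th).
  assert (HLm : Lam' * mu' >= ka).
  { unfold Lam', mu'. replace ka with (Lam * mu * rho) by (unfold rho; field; nra). nra. }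
  assert (HLam' : Lam' < Lam) by (unfold Lam'; nra).
  assert (Hmu' : mu' < mu) by (unfold mu'; nra).
  assert (HLam'0 : Lam' > 0) by (unfold Lam'; nra).
  assert (Hmu'0 : mu' > 0) by (unfold mu'; nra).
  set (c := / (ka - 1)).
  assert (Hc : 0 < c < 1).
  { unfold c. split. apply Rinv_0_lt_compat; lra.
    apply (Rmult_lt_reg_l (ka - 1)); [lra|]. rewrite Rinv_r by lra. lra. }
  assert (HJp : Rabs Jv > 0) by (apply Rabs_pos_lt; auto).
  set (eta := Rabs Jv * (1 - c) / 4).
  assert (Heta : eta > 0) by (unfold eta; apply Rdiv_lt_0_compat; [apply Rmult_lt_0_compat|]; lra).
  destruct (unif F G delta HF) as [lam [V [tau1 [Hl [HV [Ht1 [Ht1d HU]]]]]]].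
  pose proof (inv_lt1 lam Hl) as Hil.
  set (W := V / (1 - / lam)).
  assert (HW : W > 0) by (unfold W; apply Rdiv_lt_0_compat; lra).
  pose proof (inv_lt1 ka ltac:(lra)) as Hika.
  destruct (pow_lt_1_zero (/ ka) ltac:(rewrite Rabs_right; lra) (Rabs Jv * (1 - c) / 4 / W)) as [M0 HM0].
  { apply Rdiv_lt_0_compat; [|lra]. apply Rdiv_lt_0_compat; [apply Rmult_lt_0_compat|]; lra. }
  specialize (HM0 M0 (le_n _)). rewrite Rabs_right in HM0 by (apply Rle_ge, pow_le; lra).
  rewrite pow_inv in HM0.
  assert (HkM : ka ^ M0 > 0) by (apply pow_lt; lra).
  assert (HWk : W / ka ^ M0 < Rabs Jv * (1 - c) / 4).
  { unfold Rdiv at 1. replace (W * / ka ^ M0) with (W * (/ ka ^ M0)) by ring.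
    apply Rlt_le_trans with (W * (Rabs Jv * (1 - c) / 4 / W)). apply Rmult_lt_compat_l; lra.
    right; field; lra. }
  destruct (block_unif F G delta HF p eta Lam' Hpp Heta HLam') as [d [Hd Kb]].
  destruct (Df_unif F G delta HF mu' Hmu') as [dc [tc [Hdc [Htc Kc]]]].
  set (dl := Rmin (Rmin d dc) (1 / 2)).
  assert (Hdl : dl > 0) by (unfold dl; apply Rmin_pos; [apply Rmin_pos|]; lra).
  pose proof (Rmin_l (Rmin d dc) (1 / 2)). pose proof (Rmin_r (Rmin d dc) (1 / 2)).
  pose proof (Rmin_l d dc). pose proof (Rmin_r d dc).
  destruct Hpp as [Hp1 [Hp0 Hp3]].
  destruct (orbit_small F G delta HF p M0 dl Hdl Hp0) as [tauM [HtauM KM]].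
  set (tau := Rmin (Rmin tau1 d) (Rmin tc tauM)).
  assert (Htau : tau > 0) by (unfold tau; apply Rmin_pos; apply Rmin_pos; lra).
  pose proof (Rmin_l (Rmin tau1 d) (Rmin tc tauM)). pose proof (Rmin_r (Rmin tau1 d) (Rmin tc tauM)).
  pose proof (Rmin_l tau1 d). pose proof (Rmin_r tau1 d). pose proof (Rmin_l tc tauM). pose proof (Rmin_r tc tauM).
  exists tau. split; auto. split. unfold tau; lra.
  intros t r Ht [Hr1 [Hr0 Hr3]].
  assert (Htd : Rabs t < delta) by (unfold tau in *; lra).
  assert (HUt : U1 (F t)) by (apply (FU F G delta HF); auto).
  assert (HUt' := HU t ltac:(unfold tau in *; lra)).
  set (f := F t) in *.
  assert (Hf0 : -1 <= f 0 <= 1) by (apply U1_range; auto; lra).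
  assert (HEnz : forall i, Dfn f i (f 0) <> 0) by (intros; apply Dfn_neq0; auto).
  assert (HIi : forall k y, -1 <= y <= 1 -> -1 <= Nat.iter k f y <= 1) by (intros; apply iter_I1; auto).
  apply (AL (fun i => xo F i t) (fun i => Dfn f i (f 0)) (Jterm f (G t))
           (fun m => BS f (G t) p (xo F (m * p) t)) p r M0 dl ka eta Jv W); auto.
  all: try (solve [lia| lra]).
  -
    intros m Hy Hmr.
    set (Y := xo F (m * p) t) in *.
    assert (HY : -1 <= Y <= 1) by (unfold Y, xo; apply HIi; lra).
    destruct (Kb t Y ltac:(unfold tau in *; lra) ltac:(unfold dl in *; lra)) as [Ba [Bb Bc]].
    fold f in Ba, Bb, Bc.
    assert (EY : forall j, Nat.iter (j + m * p) f 0 = Nat.iter j f Y) by (intros; rewrite Nat.iter_add; auto).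
    assert (C1 : ((m + 1) * p <= r)%nat).
    { destruct (Nat.le_gt_cases ((m + 1) * p) r) as [H'|H']; auto. exfalso.
      apply (Ba (r - m * p)%nat). lia.
      rewrite <- EY. replace (r - m * p + m * p)%nat with r by lia. exact Hr0. }
    assert (ED : Dfn f ((m + 1) * p) (f 0) = Dfn f (m * p) (f 0) * Dfn f p (f Y)).
    { replace ((m + 1) * p)%nat with (m * p + p)%nat by lia. rewrite Dfn_add. rewrite Nat.iter_swap. auto. }
    assert (HDp : Dfn f p (f Y) = Dfn f (p - 1) (f Y) * Df f (Nat.iter ((m + 1) * p) f 0)).
    { replace p with (S (p - 1)) at 1 by lia. rewrite Dfn_succ. f_equal. f_equal.
      rewrite <- Nat.iter_succ_r. replace (S (p - 1)) with p by lia.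
      replace ((m + 1) * p)%nat with (p + m * p)%nat by lia. rewrite EY. auto. }
    split; auto. split; [| split; [| split]].
    + replace ((m + 1) * p)%nat with (m * p + p)%nat by lia.
      rewrite sum_split; auto. change (Nat.iter (m * p) f 0) with Y. field. apply HEnz.
      intros i Hi. apply Dfn_neq0; auto. apply U1_range; auto.
    + unfold Jv. lra.
    + intros Hy'. rewrite ED, HDp. rewrite !Rabs_mult.
      assert (HD1 : mu' <= Rabs (Df f (Nat.iter ((m + 1) * p) f 0))).
      { apply Kc. unfold tau in *; lra. unfold xo in Hy'. fold f in Hy'. unfold dl in *; lra.
        apply HIi; lra. }
      assert (HEm := Rabs_pos (Dfn f (m * p) (f 0))).
      assert (Rabs (Dfn f (p - 1) (f Y)) * Rabs (Df f (Nat.iter ((m + 1) * p) f 0)) >= ka).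
      { apply Rge_trans with (Lam' * mu'); auto. apply Rle_ge.
        apply Rmult_le_compat; lra. }
      nra.
    + rewrite ED. rewrite Rabs_mult.
      assert (1 <= Rabs (Dfn f p (f Y))).
      { apply Rle_trans with (lam ^ p). apply pow_R1_Rle. lra.
        apply Dfn_lower. lra. intros k. apply HUt'. apply HIi. apply U1_range; auto. }
      assert (HEm := Rabs_pos (Dfn f (m * p) (f 0))). nra.
  -
    intros N HN.
    assert (HEN : Rabs (Dfn f N (f 0)) > 0) by (apply Rabs_pos_lt; auto).
    assert (T := tail_bound2 (Jterm f (G t)) (V / Rabs (Dfn f N (f 0))) (/ lam) N
                   ltac:(lra) ltac:(apply Rlt_le, Rdiv_lt_0_compat; lra)).
    replace (W / Rabs (Dfn f N (f 0))) with (V / Rabs (Dfn f N (f 0)) / (1 - / lam)) by (unfold W; field; lra).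
    apply T; auto.
    intros i Hi. unfold Jterm.
    replace (Dfn f i (f 0)) with (Dfn f N (f 0) * Dfn f (i - N) (Nat.iter N f (f 0))).
    2: { rewrite <- Dfn_add. f_equal. lia. }
    assert (HL : lam ^ (i - N) <= Rabs (Dfn f (i - N) (Nat.iter N f (f 0)))).
    { apply Dfn_lower. lra. intros k. apply HUt'. apply HIi. apply HIi; auto. }
    assert (HLp : lam ^ (i - N) > 0) by (apply pow_lt; lra).
    assert (HG : Rabs (G t (Nat.iter i f 0)) <= V) by (apply HUt'; apply HIi; lra).
    unfold Rdiv. rewrite Rabs_mult, Rabs_Rinv, Rabs_mult.
    2: { apply Rmult_integral_contrapositive_currified; auto. intro Z. rewrite Z, Rabs_R0 in HL. lra. }
    rewrite pow_inv. rewrite Rinv_mult.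
    replace (V * / Rabs (Dfn f N (f 0)) * / lam ^ (i - N)) with (V * (/ Rabs (Dfn f N (f 0)) * / lam ^ (i - N))) by ring.
    apply Rmult_le_compat. apply Rabs_pos. 
    apply Rlt_le, Rmult_lt_0_compat; apply Rinv_0_lt_compat; lra. auto.
    apply Rmult_le_compat_l. apply Rlt_le, Rinv_0_lt_compat; lra.
    apply Rinv_le_contravar; auto.
  - intros m Hm. apply KM; auto. unfold tau in *; lra.
  - unfold eta. 
    assert (Rabs Jv * (1 - c) / 4 * (1 + c) < Rabs Jv * (1 - c) / 2).
    { assert (X : Rabs Jv * (1 - c) > 0) by (apply Rmult_lt_0_compat; lra).
      set (Y := Rabs Jv * (1 - c)) in *. assert (Y * (1 - c) > 0) by (apply Rmult_lt_0_compat; lra). nra. }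
    replace ((Rabs Jv - Rabs Jv * (1 - c) / 4) - (Rabs Jv + Rabs Jv * (1 - c) / 4) / (ka - 1))
      with (Rabs Jv * (1 - c) - Rabs Jv * (1 - c) / 4 * (1 + c)) by (unfold c; field; lra).
    nra.
Qed.

End Fam7.


Lemma lim_inv_S : is_lim_seq (fun n => / INR (S n)) 0.
Proof.
  apply is_lim_seq_spec. intros eps. set (e := pos eps). assert (He : 0 < e) by apply cond_pos.
  destruct (archimed (/ e)) as [Ha _].
  assert (Hz : (0 <= up (/ e))%Z).
  { apply le_IZR. pose proof (Rinv_0_lt_compat e He). lra. }
  exists (Z.to_nat (up (/ e))). intros n Hn.
  rewrite Rminus_0_r. rewrite Rabs_right.
  2: apply Rle_ge, Rlt_le, Rinv_0_lt_compat, lt_0_INR; lia.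
  assert (INR n >= IZR (up (/ e))).
  { rewrite <- (Znat.Z2Nat.id (up (/ e))) by auto. rewrite <- INR_IZR_INZ. apply Rle_ge, le_INR. lia. }
  rewrite S_INR.
  apply (Rmult_lt_reg_l (INR n + 1)). pose proof (pos_INR n); lra.
  rewrite Rinv_r by (pose proof (pos_INR n); lra).
  apply (Rmult_lt_reg_l (/ e)). apply Rinv_0_lt_compat; lra.
  replace (/ e * ((INR n + 1) * e)) with (INR n + 1) by (field; lra). lra.
Qed.

Section Fam8.
Variables (F G : R -> R -> R) (delta : R).
Hypothesis HF : C1_family F G delta.

Lemma deriv_cont f x l : derivable_pt_lim f x l ->
  forall e, e > 0 -> exists d, d > 0 /\ forall y, Rabs (y - x) < d -> Rabs (f y - f x) < e.
Proof.
  intros H e He. pose proof (derivable_continuous_pt f x (exist _ l H)) as C.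
  destruct (C e He) as [d [Hd K]]. exists d. split; auto.
  intros y Hy. destruct (Req_dec y x). subst. rewrite Rminus_eq_0, Rabs_R0; lra.
  apply (K y). split. split. exact I. auto. exact Hy.
Qed.

Lemma partA_step tau n a b :
  (forall t r, Rabs t < tau -> prime_period (F t) r -> sumR r (Jterm (F t) (G t)) <> 0) ->
  tau <= delta -> 0 < a -> a < b -> b < tau ->
  (forall s, a <= s <= b -> forall j, (1 <= j <= n)%nat -> xo F j s <> 0) ->
  exists a' b', a <= a' /\ a' < b' /\ b' <= b /\
    forall s, a' <= s <= b' -> forall j, (1 <= j <= S n)%nat -> xo F j s <> 0.
Proof.
  intros HSH Htd Ha Hab Hb Hn.
  destruct (classic (exists s, a < s < b /\ xo F (S n) s <> 0)) as [[s [Hs Hx]]|Hno].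
  - assert (Hsd : Rabs s < delta) by (rewrite Rabs_right; lra).
    assert (D := orbit_deriv F G delta HF n s Hsd ltac:(intros j Hj; apply Hn; lra || lia)).
    assert (Hxp : Rabs (xo F (S n) s) > 0) by (apply Rabs_pos_lt; auto).
    destruct (deriv_cont _ _ _ D _ Hxp) as [d [Hd K]].
    exists (Rmax a (s - d / 2)), (Rmin b (s + d / 2)).
    split. apply Rmax_l. split. unfold Rmax, Rmin; destruct (Rle_dec a _); destruct (Rle_dec b _); lra.
    split. apply Rmin_l.
    intros s' Hs' j Hj. pose proof (Rmax_l a (s - d / 2)). pose proof (Rmax_r a (s - d / 2)).
    pose proof (Rmin_l b (s + d / 2)). pose proof (Rmin_r b (s + d / 2)).
    destruct (Nat.eq_dec j (S n)).
    + subst. intro Z. specialize (K s' ltac:(apply Rabs_def1; lra)). rewrite Z in K.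
      rewrite Rminus_0_l, Rabs_Ropp in K. lra.
    + apply Hn; lra || lia.
  - exfalso. set (s0 := (a + b) / 2).
    assert (Hz : forall s, a < s < b -> xo F (S n) s = 0).
    { intros s Hs. apply NNPP. intro H. apply Hno. eauto. }
    assert (Hs0d : Rabs s0 < delta) by (unfold s0; rewrite Rabs_right; lra).
    assert (Hs0t : Rabs s0 < tau) by (unfold s0; rewrite Rabs_right; lra).
    assert (HPP : prime_period (F s0) (S n)).
    { split. lia. split. apply (Hz s0). unfold s0; lra.
      intros q Hq1 Hq2. apply (Hn s0). unfold s0; lra. lia. }
    assert (HS := HSH s0 (S n) Hs0t HPP).
    assert (D := orbit_deriv F G delta HF n s0 Hs0d ltac:(intros j Hj; apply Hn; unfold s0; lra || lia)).
    assert (D0 : derivable_pt_lim (xo F (S n)) s0 0).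
    { intros e He. assert (Hm : 0 < Rmin (s0 - a) (b - s0)) by (apply Rmin_pos; unfold s0; lra).
      exists (mkposreal _ Hm). intros h Hh Hlt. simpl in Hlt.
      pose proof (Rmin_l (s0 - a) (b - s0)). pose proof (Rmin_r (s0 - a) (b - s0)).
      apply Rabs_def2 in Hlt.
      rewrite (Hz (s0 + h)) by lra. rewrite (Hz s0) by (unfold s0; lra).
      replace ((0 - 0) / h - 0) with 0 by (field; auto). rewrite Rabs_R0; lra. }
    assert (E := uniqueness_limite _ _ _ _ D D0).
    apply Rmult_integral in E. destruct E as [E|E]; [| contradiction].
    revert E. apply Dfn_neq0. apply (FU F G delta HF); auto.
    apply U1_range. apply (FU F G delta HF); auto. lra.
Qed.

End Fam8.


Section Fam9.
Variables (F G : R -> R -> R) (delta : R).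
Hypothesis HF : C1_family F G delta.

Lemma nested tau a0 b0 :
  (forall t r, Rabs t < tau -> prime_period (F t) r -> sumR r (Jterm (F t) (G t)) <> 0) ->
  tau <= delta -> 0 < a0 -> a0 < b0 -> b0 < tau ->
  exists t, a0 <= t <= b0 /\ ~ periodic (F t).
Proof.
  intros HSH Htd Ha0 Hab Hb0.
  set (P := fun n (ab : R * R) => a0 <= fst ab /\ fst ab < snd ab /\ snd ab <= b0 /\
          forall s, fst ab <= s <= snd ab -> forall j, (1 <= j <= n)%nat -> xo F j s <> 0).
  set (next := fun n (ab : R * R) => epsilon (inhabits (0, 0))
        (fun ab' => P (S n) ab' /\ fst ab <= fst ab' /\ snd ab' <= snd ab)).
  set (iv := fix iv n := match n with O => (a0, b0) | S k => next k (iv k) end).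
  assert (Hiv : forall n, P n (iv n) /\ fst (iv n) <= fst (iv (S n)) /\ snd (iv (S n)) <= snd (iv n)).
  { assert (HP : forall n, P n (iv n)).
    { induction n.
      - simpl. unfold P; simpl. split; [lra| split; [lra| split; [lra|]]]. intros; lia.
      - destruct IHn as [I1 [I2 [I3 I4]]].
        destruct (partA_step F G delta HF tau n (fst (iv n)) (snd (iv n)) HSH Htd ltac:(lra) I2 ltac:(lra) I4)
          as [a' [b' [J1 [J2 [J3 J4]]]]].
        assert (EX : exists ab', P (S n) ab' /\ fst (iv n) <= fst ab' /\ snd ab' <= snd (iv n)).
        { exists (a', b'). unfold P; simpl. split; [split; [lra| split; [lra| split; [lra| auto]]]|]. lra. }
        apply (epsilon_spec (inhabits (0, 0)) _ EX). }
    intros n. split; auto.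
    destruct (HP n) as [I1 [I2 [I3 I4]]].
    destruct (partA_step F G delta HF tau n (fst (iv n)) (snd (iv n)) HSH Htd ltac:(lra) I2 ltac:(lra) I4)
          as [a' [b' [J1 [J2 [J3 J4]]]]].
    assert (EX : exists ab', P (S n) ab' /\ fst (iv n) <= fst ab' /\ snd ab' <= snd (iv n)).
    { exists (a', b'). unfold P; simpl. split; [split; [lra| split; [lra| split; [lra| auto]]]|]. lra. }
    pose proof (epsilon_spec (inhabits (0, 0)) _ EX) as [_ K]. exact K. }
  assert (Hmono : forall m k, (m <= k)%nat -> fst (iv m) <= fst (iv k) /\ snd (iv k) <= snd (iv m)).
  { intros m k Hmk. induction k.
    - assert (m = 0%nat) by lia. subst. lra.
    - destruct (Nat.eq_dec m (S k)). subst. lra.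
      destruct (IHk ltac:(lia)). destruct (Hiv k) as [_ [H1 H2]]. lra. }
  set (E := fun x => exists n, x = fst (iv n)).
  destruct (completeness E) as [ts [Hub Hlub]].
  { exists b0. intros x [n Hx]. subst. destruct (Hiv n) as [[_ [H1 [H2 _]]] _]. lra. }
  { exists (fst (iv 0%nat)). exists 0%nat. auto. }
  assert (Hin : forall n, fst (iv n) <= ts <= snd (iv n)).
  { intros n. split. apply Hub. exists n; auto.
    apply Hlub. intros x [m Hx]. subst.
    destruct (Hmono m (max m n) ltac:(lia)). destruct (Hmono n (max m n) ltac:(lia)).
    destruct (Hiv (max m n)) as [[_ [HH _]] _]. lra. }
  exists ts. split.
  - destruct (Hin 0%nat) as [H1 H2]. simpl in H1, H2. lra.
  - intros [q [Hq Hz]]. destruct (Hiv q) as [[_ [_ [_ K]]] _].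
    apply (K ts (Hin q) q). lia. exact Hz.
Qed.

Lemma partA : periodic (F 0) -> good (F 0) -> J (F 0) (G 0) <> 0 ->
  forall eps, eps > 0 -> exists t, 0 < t < eps /\ Rabs t < delta /\ ~ periodic (F t).
Proof.
  intros Hper Hgood HJ eps Heps.
  destruct Hgood as [Hn|[p [Hpp [Hp2 Hb]]]]. contradiction.
  assert (EJ : J (F 0) (G 0) = sumR p (Jterm (F 0) (G 0))).
  { unfold J. destruct (excluded_middle_informative (periodic (F 0))); [| contradiction].
    f_equal. apply prime_period_unique with (F 0); auto.
    apply (epsilon_spec (inhabits 0%nat) (prime_period (F 0))). eauto. }
  rewrite EJ in HJ.
  destruct (SH F G delta HF p Hpp Hp2 Hb HJ) as [tau [Htau [Htd HSH]]].
  set (b0 := Rmin eps tau / 2).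
  assert (Hm : 0 < Rmin eps tau) by (apply Rmin_pos; lra).
  pose proof (Rmin_l eps tau). pose proof (Rmin_r eps tau).
  destruct (nested tau (b0 / 2) b0 HSH Htd ltac:(unfold b0; lra) ltac:(unfold b0; lra) ltac:(unfold b0; lra))
    as [t [Ht Hnp]].
  exists t. split. unfold b0 in *; split; lra. split; auto. rewrite Rabs_right by (unfold b0 in *; lra). unfold b0 in *; lra.
Qed.

End Fam9.

Theorem corollary4p1 (F G : R -> R -> R) (delta : R) :
  C1_family F G delta ->
  good (F 0) ->
  J (F 0) (G 0) <> 0 ->
  (periodic (F 0) ->
     exists tn : nat -> R, is_lim_seq tn 0 /\
       forall n, Rabs (tn n) < delta /\ ~ periodic (F (tn n))) /\
  (~ periodic (F 0) ->
     exists tn : nat -> R, is_lim_seq tn 0 /\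
       forall n, Rabs (tn n) < delta /\ periodic (F (tn n))).
Proof.
  intros HF Hgood HJ.
  assert (Hpos : forall n, / INR (S n) > 0) by (intros n; apply Rinv_0_lt_compat, lt_0_INR; lia).
  split.
  - intros Hper.
    assert (H : forall n, exists t, 0 < t < / INR (S n) /\ Rabs t < delta /\ ~ periodic (F t)).
    { intros n. apply (partA F G delta HF Hper Hgood HJ). apply Hpos. }
    exists (fun n => proj1_sig (constructive_indefinite_description _ (H n))).
    split.
    + apply (is_lim_seq_le_le (fun _ => 0) _ (fun n => / INR (S n))).
      intros n. pose proof (proj2_sig (constructive_indefinite_description _ (H n))) as [Ht _]. split; lra.
      apply is_lim_seq_const. apply lim_inv_S.
    + intros n. pose proof (proj2_sig (constructive_indefinite_description _ (H n))) as [_ Ht]. exact Ht.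
  - intros Hnp.
    assert (H : forall n, exists t, 0 < t < / INR (S n) /\ Rabs t < delta /\ periodic (F t)).
    { intros n. apply (partB F G delta HF Hnp HJ). apply Hpos. }
    exists (fun n => proj1_sig (constructive_indefinite_description _ (H n))).
    split.
    + apply (is_lim_seq_le_le (fun _ => 0) _ (fun n => / INR (S n))).
      intros n. pose proof (proj2_sig (constructive_indefinite_description _ (H n))) as [Ht _]. split; lra.
      apply is_lim_seq_const. apply lim_inv_S.
    + intros n. pose proof (proj2_sig (constructive_indefinite_description _ (H n))) as [_ Ht]. exact Ht.
Qed.
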